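(* Let $p/q$ be an even rational parameter and $P=2p/(p+q)$. For every unit square $S$ of the integer grid, with center $c$, the set of good edges of $S$ (its grid light set) coincides with the set of edges of $S$ named by the letters in the label of the piece of the partition of $X_P$ containing $\Xi_P(c)$ (its tile light set).
   Context: Grid description. An even rational parameter is a rational $p/q\in(0,1)$, $p,q$ positive coprime integers, $pq$ even. Put $\omega=p+q$, $P=2p/\omega$, $Q=2q/\omega$. Line families: $\mathcal H$ = lines $y=n$, $\mathcal V$ = lines $x=n$ ($n\in\mathbb Z$), $\mathcal P$ = lines of slope $-P$ with integer $y$-intercept, $\mathcal Q$ = lines of slope $-Q$ with integer $y$-intercept. Functions mod $2\mathbb Z$, values represented in $(-1,1]$: $F_H=2Py$, $F_V=2Px$, $F_P=Py+P^2x+1$, $F_Q=Py+PQx+1$. A unit segment is an edge of a unit square of the integer grid; horizontal ones lie on $\mathcal H$-lines (set $A=H$), vertical ones on $\mathcal V$-lines (set $A=V$). A point $z$ of a unit segment $s$ is a light point of $s$ if for some $B\in\{P,Q\}$, $z$ lies on a line of $\mathcal B$, $F_A(z)F_B(z)>0$ and $|F_B(z)|<|F_A(z)|$. The light count of $s$ is the number of distinct light points of $s$, a light point that is the midpoint of a horizontal $s$ being counted twice; $s$ is good if its light count is $1$. The edges of a unit square are called N, S, E, W (north, south, east, west). Tile description. Let $\Lambda_P\subset\mathbb R^3$ be the lattice generated by $(2,P,P),(0,2,0),(0,0,2)$, $X_P=\mathbb R^3/\Lambda_P$ with coordinates $(T,U_1,U_2)$ and fundamental domain $[-1,1]^3$,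 and $\Xi_P(x,y)=(2Px+2y,2Px,2Px+2Py)\bmod\Lambda_P$. Each fiber $\{T\}\times[-1,1]^2$ ($T\in[-1,1]$) is partitioned as follows: given $u_1\le u_2\le u_3$, the lines $U_1=u_i$, $U_2=u_i$ ($i=1,2,3$) cut $[-1,1]^2$ into a $4\times4$ grid of rectangles, indexed by (column $a$, row $b$), $a,b\in\{1,..,4\}$, columns counted in increasing $U_1$ and rows in increasing $U_2$. Four of these are special, each labeled by one letter, with positions: for $T\in[-1,-1+P]$: $(u_1,u_2,u_3)=(T,1-P,2-P+T)$, W at $(4,4)$, N at $(1,3)$, E at $(2,2)$, S at $(3,1)$; for $T\in[-1+P,1-P]$: $(u_1,u_2,u_3)=(-1+P,T,1-P)$, N at $(1,4)$, E at $(3,3)$, W at $(2,2)$, S at $(4,1)$; for $T\in[1-P,1]$: $(u_1,u_2,u_3)=(-2+P+T,-1+P,T)$, N at $(2,4)$, W at $(3,3)$, S at $(4,2)$, E at $(1,1)$. Each non-special rectangle is labeled by the unordered pair $\{X,Y\}$ where $X$ is the letter of the special rectangle in its column and $Y$ that of the special rectangle in its row; special rectangles get the empty label. The pieces of the partition of $X_P$ are, for each of the seven labels, the union over all fibers of the rectangles with that label. For a tile center $c\in\{(m+\frac12,n+\frac12)\}$, the point $\Xi_P(c)$ (represented in $[-1,1]^3$) lies in the interior of a unique piece (this is known to hold for even rational parameters), so its label is well defined; the tile light set of the square centered at $c$ is the set of edges whose letters occur in that label (empty for the empty label). *)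

(* Defs.v *)
From Stdlib Require Import Reals Lra Lia ZArith List Arith.
Open Scope R_scope.

Definition even_rational_param (p q : nat) : Prop :=
  (0 < p)%nat /\ (p < q)%nat /\ Nat.gcd p q = 1%nat /\ Nat.Even (p * q).

Definition omega (p q : nat) : R := INR p + INR q.
Definition Ppar (p q : nat) : R := 2 * INR p / omega p q.
Definition Qpar (p q : nat) : R := 2 * INR q / omega p q.

(* Reduction mod 2Z with representative in (-1,1]. *)
Definition red2 (x : R) : R := x + 2 * IZR (Int_part ((1 - x) / 2)).

Definition point := (R * R)%type.

Definition F_H (P : R) (z : point) : R := red2 (2 * P * snd z).
Definition F_V (P : R) (z : point) : R := red2 (2 * P * fst z).
Definition F_P (P : R) (z : point) : R := red2 (P * snd z + P ^ 2 * fst z + 1).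
Definition F_Q (P Q : R) (z : point) : R := red2 (P * snd z + P * Q * fst z + 1).

Definition on_slope_line (s : R) (z : point) : Prop :=
  exists k : Z, snd z = - s * fst z + IZR k.

(* Hseg m n : segment from (m,n) to (m+1,n); Vseg m n : from (m,n) to (m,n+1). *)
Inductive segment := Hseg (m n : Z) | Vseg (m n : Z).

Definition on_seg (s : segment) (z : point) : Prop :=
  match s with
  | Hseg m n => IZR m <= fst z <= IZR m + 1 /\ snd z = IZR n
  | Vseg m n => fst z = IZR m /\ IZR n <= snd z <= IZR n + 1
  end.

Definition F_A (P : R) (s : segment) (z : point) : R :=
  match s with Hseg _ _ => F_H P z | Vseg _ _ => F_V P z end.

Definition is_light_point (P Q : R) (s : segment) (z : point) : Prop :=
  on_seg s z /\
  ((on_slope_line P z /\ F_A P s z * F_P P z > 0 /\ Rabs (F_P P z) < Rabs (F_A P s z)) \/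
   (on_slope_line Q z /\ F_A P s z * F_Q P Q z > 0 /\ Rabs (F_Q P Q z) < Rabs (F_A P s z))).

Definition hmid_weight (s : segment) (z : point) : nat :=
  match s with
  | Hseg m n =>
      if Req_EM_T (fst z) (IZR m + /2) then
        if Req_EM_T (snd z) (IZR n) then 2%nat else 1%nat
      else 1%nat
  | Vseg _ _ => 1%nat
  end.

Fixpoint weighted_count (s : segment) (l : list point) : nat :=
  match l with
  | nil => 0%nat
  | z :: l' => (hmid_weight s z + weighted_count s l')%nat
  end.

Definition light_count (P Q : R) (s : segment) (n : nat) : Prop :=
  exists l : list point,
    NoDup l /\ (forall z, In z l <-> is_light_point P Q s z) /\ weighted_count s l = n.

Definition good (P Q : R) (s : segment) : Prop := light_count P Q s 1.

Inductive edge := eN | eS | eE | eW.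

(* the unit square [m,m+1] x [n,n+1] *)
Definition edge_seg (m n : Z) (e : edge) : segment :=
  match e with
  | eN => Hseg m (n + 1)
  | eS => Hseg m n
  | eE => Vseg (m + 1) n
  | eW => Vseg m n
  end.

Definition center (m n : Z) : point := (IZR m + /2, IZR n + /2).

Inductive regime := Reg1 | Reg2 | Reg3.

Definition regime_applies (P : R) (r : regime) (T : R) : Prop :=
  match r with
  | Reg1 => -1 <= T <= -1 + P
  | Reg2 => -1 + P <= T <= 1 - P
  | Reg3 => 1 - P <= T <= 1
  end.

Definition cuts (P : R) (r : regime) (T : R) : R * R * R :=
  match r with
  | Reg1 => (T, 1 - P, 2 - P + T)
  | Reg2 => (-1 + P, T, 1 - P)
  | Reg3 => (-2 + P + T, -1 + P, T)
  end.

(* positions (column, row) of the special rectangles *)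
Definition spec_pos (r : regime) (e : edge) : nat * nat :=
  match r, e with
  | Reg1, eW => (4, 4) | Reg1, eN => (1, 3) | Reg1, eE => (2, 2) | Reg1, eS => (3, 1)
  | Reg2, eN => (1, 4) | Reg2, eE => (3, 3) | Reg2, eW => (2, 2) | Reg2, eS => (4, 1)
  | Reg3, eN => (2, 4) | Reg3, eW => (3, 3) | Reg3, eS => (4, 2) | Reg3, eE => (1, 1)
  end%nat.

Definition band (u : R * R * R) (a : nat) (x : R) : Prop :=
  let '(u1, u2, u3) := u in
  match a with
  | 1%nat => -1 <= x <= u1
  | 2%nat => u1 <= x <= u2
  | 3%nat => u2 <= x <= u3
  | 4%nat => u3 <= x <= 1
  | _ => False
  end.

Definition rect_label (r : regime) (a b : nat) (e : edge) : Prop :=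
  (fst (spec_pos r e) = a \/ snd (spec_pos r e) = b) /\
  ~ (exists e', spec_pos r e' = (a, b)).

(* A label is represented by its set of letters L : edge -> Prop.
   (T,U1,U2) in [-1,1]^3 lies in the (closed) piece with label L. *)
Definition in_fiber_piece (P : R) (L : edge -> Prop) (T U1 U2 : R) : Prop :=
  exists (r : regime) (a b : nat),
    regime_applies P r T /\
    band (cuts P r T) a U1 /\ band (cuts P r T) b U2 /\
    (forall e, L e <-> rect_label r a b e).

(* Lift to R^3 of the piece with label L of X_P = R^3 / Lambda_P,
   Lambda_P generated by (2,P,P), (0,2,0), (0,0,2). *)
Definition in_piece (P : R) (L : edge -> Prop) (v : R * R * R) : Prop :=
  let '(T, U1, U2) := v in
  exists i j k : Z,
    let T' := T - 2 * IZR i in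
    let U1' := U1 - P * IZR i - 2 * IZR j in
    let U2' := U2 - P * IZR i - 2 * IZR k in
    -1 <= T' <= 1 /\ -1 <= U1' <= 1 /\ -1 <= U2' <= 1 /\
    in_fiber_piece P L T' U1' U2'.

Definition in_piece_interior (P : R) (L : edge -> Prop) (v : R * R * R) : Prop :=
  let '(T, U1, U2) := v in
  exists eps : R, eps > 0 /\
    forall T' U1' U2' : R,
      Rabs (T' - T) < eps -> Rabs (U1' - U1) < eps -> Rabs (U2' - U2) < eps ->
      in_piece P L (T', U1', U2').

Definition Xi (P : R) (z : point) : R * R * R :=
  (2 * P * fst z + 2 * snd z, 2 * P * fst z, 2 * P * fst z + 2 * P * snd z).

(* Main.v *)
Require Import Defs.
From Stdlib Require Import Reals Lra Lia ZArith List Bool Arith.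
Open Scope R_scope.

Lemma IZR_small (z : Z) : -1 < IZR z < 1 -> z = 0%Z.
Proof. intros [H1 H2]. apply lt_IZR in H1. apply lt_IZR in H2. lia. Qed.

Lemma Int_part_spec r : IZR (Int_part r) <= r < IZR (Int_part r) + 1.
Proof. destruct (base_Int_part r). lra. Qed.

Lemma Int_part_unique r k : IZR k <= r < IZR k + 1 -> Int_part r = k.
Proof.
  intros H. destruct (Int_part_spec r).
  assert (Int_part r - k = 0)%Z as E.
  { apply IZR_small. rewrite minus_IZR. lra. }
  lia.
Qed.

Lemma red2_spec x : -1 < red2 x <= 1 /\ exists k, red2 x = x + 2 * IZR k.
Proof.
  unfold red2. destruct (Int_part_spec ((1 - x) / 2)) as [H1 H2].
  split. lra. eexists; reflexivity.
Qed.

Lemma red2_unique x y k : -1 < y <= 1 -> y = x + 2 * IZR k -> red2 x = y.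
Proof.
  intros Hy Hk. destruct (red2_spec x) as [Hr [k' Hk']].
  assert (k - k' = 0)%Z as E.
  { apply IZR_small. rewrite minus_IZR. lra. }
  assert (k = k') by lia. subst. lra.
Qed.

Lemma red2_shift x k : red2 (x + 2 * IZR k) = red2 x.
Proof.
  destruct (red2_spec x) as [Hr [k' Hk']].
  apply (red2_unique _ _ (k' - k)). lra. rewrite minus_IZR. lra.
Qed.

Lemma red2_id x : -1 < x <= 1 -> red2 x = x.
Proof. intros H. apply (red2_unique _ _ 0). lra. simpl. lra. Qed.

Definition r7 (X F : R) : Prop := -1 < F <= 1 /\
  (F = X \/ F = X - 2 \/ F = X + 2 \/ F = X - 4 \/ F = X + 4 \/ F = X - 6 \/ F = X + 6).

Lemma red2_r7 x : -7 < x < 7 -> r7 x (red2 x).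
Proof.
  intros Hx. destruct (red2_spec x) as [Hr [k Hk]]. split; [exact Hr|].
  assert (-4 < IZR k < 4) as Hb by lra.
  destruct Hb as [Hb1 Hb2].
  apply lt_IZR in Hb1. apply lt_IZR in Hb2.
  assert (k = -3 \/ k = -2 \/ k = -1 \/ k = 0 \/ k = 1 \/ k = 2 \/ k = 3)%Z as Hc by lia.
  destruct Hc as [->|[->|[->|[->|[->|[->| ->]]]]]]; simpl in Hk; lra.
Qed.

Section Par.
Variable W : Z.
Definition In_ x := exists N : Z, x * IZR W = IZR N.
Definition Ev x := exists N : Z, x * IZR W = 2 * IZR N.
Definition Od x := exists N : Z, x * IZR W = 2 * IZR N + 1.
Hypothesis Wodd : exists M, W = (2 * M + 1)%Z.
Hypothesis Wpos : (0 < W)%Z.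

Lemma Ev_add x y : Ev x -> Ev y -> Ev (x + y).
Proof. intros [a Ha] [b Hb]. exists (a+b)%Z. rewrite plus_IZR. nra. Qed.
Lemma Ev_sub x y : Ev x -> Ev y -> Ev (x - y).
Proof. intros [a Ha] [b Hb]. exists (a-b)%Z. rewrite minus_IZR. nra. Qed.
Lemma Ev_opp x : Ev x -> Ev (- x).
Proof. intros [a Ha]. exists (-a)%Z. rewrite opp_IZR. nra. Qed.
Lemma Od_add_EO x y : Ev x -> Od y -> Od (x + y).
Proof. intros [a Ha] [b Hb]. exists (a+b)%Z. rewrite plus_IZR. nra. Qed.
Lemma Od_add_OE x y : Od x -> Ev y -> Od (x + y).
Proof. intros [a Ha] [b Hb]. exists (a+b)%Z. rewrite plus_IZR. nra. Qed.
Lemma Od_sub_OE x y : Od x -> Ev y -> Od (x - y).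
Proof. intros [a Ha] [b Hb]. exists (a-b)%Z. rewrite minus_IZR. nra. Qed.
Lemma Od_sub_EO x y : Ev x -> Od y -> Od (x - y).
Proof. intros [a Ha] [b Hb]. exists (a-b-1)%Z. rewrite !minus_IZR. simpl. nra. Qed.
Lemma Ev_add_OO x y : Od x -> Od y -> Ev (x + y).
Proof. intros [a Ha] [b Hb]. exists (a+b+1)%Z. rewrite !plus_IZR. simpl. nra. Qed.
Lemma Ev_sub_OO x y : Od x -> Od y -> Ev (x - y).
Proof. intros [a Ha] [b Hb]. exists (a-b)%Z. rewrite !minus_IZR. nra. Qed.
Lemma Od_opp x : Od x -> Od (- x).
Proof. intros [a Ha]. exists (-a-1)%Z. rewrite minus_IZR, opp_IZR. simpl. nra. Qed.
Lemma Ev_mulZ x k : Ev x -> Ev (x * IZR k).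
Proof. intros [a Ha]. exists (a*k)%Z. rewrite mult_IZR. nra. Qed.
Lemma Ev_Zmul x k : Ev x -> Ev (IZR k * x).
Proof. intros [a Ha]. exists (a*k)%Z. rewrite mult_IZR. nra. Qed.
Lemma Ev_two x : In_ x -> Ev (2 * x).
Proof. intros [a Ha]. exists a. nra. Qed.
Lemma Ev_twoZ k : Ev (2 * IZR k).
Proof. exists (k * W)%Z. rewrite mult_IZR. ring. Qed.
Lemma Ev_0 : Ev 0.
Proof. exists 0%Z. simpl. ring. Qed.
Lemma Od_1 : Od 1.
Proof. destruct Wodd as [M HM]. exists M. rewrite HM, plus_IZR, mult_IZR. simpl. ring. Qed.
Lemma Ev_2 : Ev 2.
Proof. exists W. ring. Qed.

Lemma Ev_In x : Ev x -> In_ x.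
Proof. intros [a Ha]. exists (2*a)%Z. rewrite mult_IZR. simpl. lra. Qed.
Lemma Od_red2 x : Od x -> Od (red2 x).
Proof.
  intros H. destruct (red2_spec x) as [_ [k Hk]]. rewrite Hk.
  apply Od_add_OE; [exact H| apply Ev_twoZ].
Qed.
Lemma Ev_red2 x : Ev x -> Ev (red2 x).
Proof.
  intros H. destruct (red2_spec x) as [_ [k Hk]]. rewrite Hk.
  apply Ev_add; [exact H| apply Ev_twoZ].
Qed.

Definition eps := / IZR W.
Lemma eps_pos : 0 < eps.
Proof. unfold eps. apply Rinv_0_lt_compat. apply IZR_lt. exact Wpos. Qed.

Lemma In_gap x : In_ x -> x = 0 \/ x >= eps \/ x <= - eps.
Proof.
  intros [N HN]. unfold eps.
  assert (Hw : 0 < IZR W) by (apply IZR_lt; exact Wpos).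
  assert (x = IZR N / IZR W) as Ex by (rewrite <- HN; field; lra).
  destruct (Z.lt_trichotomy N 0) as [Hn|[Hn|Hn]].
  - right; right. assert (IZR N <= -1) by (apply IZR_le; lia).
    rewrite Ex. unfold Rdiv. 
    assert (0 < / IZR W) by (apply Rinv_0_lt_compat; lra).
    nra.
  - left. rewrite Ex. subst N. simpl. unfold Rdiv. ring.
  - right; left. assert (IZR N >= 1) by (apply Rle_ge, IZR_le; lia).
    rewrite Ex. unfold Rdiv.
    assert (0 < / IZR W) by (apply Rinv_0_lt_compat; lra).
    nra.
Qed.

Lemma Od_gap x : Od x -> x >= eps \/ x <= - eps.
Proof.
  intros H. assert (In_ x) as HI.
  { destruct H as [N HN]. exists (2*N+1)%Z. rewrite plus_IZR, mult_IZR. simpl. lra. }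
  destruct (In_gap x HI) as [E|E]; [|exact E].
  subst. destruct H as [N HN]. exfalso.
  assert (2 * N + 1 = 0)%Z; [|lia].
  apply eq_IZR. rewrite plus_IZR, mult_IZR. simpl. lra.
Qed.

Lemma Od_nz x : Od x -> x <> 0.
Proof. intros H. destruct (Od_gap x H); pose proof eps_pos; lra. Qed.

End Par.

Definition Lt (h F : R) : Prop := 0 < F < h \/ h < F < 0.
Definition xor (A B : Prop) := (A /\ ~B) \/ (B /\ ~A).

Lemma Lt_iff h F : (h * F > 0 /\ Rabs F < Rabs h) <-> Lt h F.
Proof.
  unfold Lt. split.
  - intros [H1 H2].
    destruct (Rlt_le_dec 0 h) as [Hh|Hh]; destruct (Rlt_le_dec 0 F) as [HF|HF].
    + rewrite (Rabs_right h), (Rabs_right F) in H2 by lra. lra.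
    + exfalso. nra.
    + exfalso. nra.
    + destruct (Req_dec h 0) as [E|E]. subst. exfalso. nra.
      destruct (Req_dec F 0) as [E'|E']. subst. exfalso. nra.
      rewrite (Rabs_left h), (Rabs_left F) in H2 by lra. lra.
  - intros [H|H].
    + split. nra. rewrite (Rabs_right h), (Rabs_right F) by lra. lra.
    + split. nra. rewrite (Rabs_left h), (Rabs_left F) by lra. lra.
Qed.

Lemma hmid_ge1 s z : (1 <= hmid_weight s z)%nat.
Proof.
  destruct s; simpl; [|lia].
  destruct (Req_EM_T _ _); [destruct (Req_EM_T _ _)|]; lia.
Qed.

Lemma wc_one s l : weighted_count s l = 1%nat ->
  exists z, l = z :: nil /\ hmid_weight s z = 1%nat.
Proof.
  destruct l as [|z l]; simpl; [discriminate|].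
  destruct l as [|z' l]; simpl.
  - intros H. exists z. split; [reflexivity| lia].
  - intros H. pose proof (hmid_ge1 s z). pose proof (hmid_ge1 s z'). lia.
Qed.

Lemma good_two P Q s z1 z2 (C1 C2 : Prop) : z1 <> z2 ->
  (forall z, is_light_point P Q s z <-> (C1 /\ z = z1) \/ (C2 /\ z = z2)) ->
  (good P Q s <-> (C1 /\ ~C2 /\ hmid_weight s z1 = 1%nat) \/ (C2 /\ ~C1 /\ hmid_weight s z2 = 1%nat)).
Proof.
  intros Hne Hch. unfold good, light_count. split.
  - intros [l [Hnd [Hl Hw]]]. destruct (wc_one s l Hw) as [z [-> Hz]].
    assert (Hz1 : is_light_point P Q s z) by (apply Hl; left; reflexivity).
    apply Hch in Hz1. destruct Hz1 as [[HC1 ->]|[HC2 ->]].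
    + left. split; [exact HC1|]. split; [|exact Hz].
      intros HC2. assert (In z2 (z1 :: nil)) as Hi by (apply Hl, Hch; right; split; auto).
      destruct Hi as [Hi|[]]. congruence.
    + right. split; [exact HC2|]. split; [|exact Hz].
      intros HC1. assert (In z1 (z2 :: nil)) as Hi by (apply Hl, Hch; left; split; auto).
      destruct Hi as [Hi|[]]. congruence.
  - intros [[HC1 [HC2 Hw]]|[HC2 [HC1 Hw]]].
    + exists (z1 :: nil). split; [apply NoDup_cons; [simpl; tauto|apply NoDup_nil]|]. split.
      * intros z. rewrite Hch. simpl. split.
        { intros [<-|[]]. left. auto. }
        { intros [[_ ->]|[H _]]. left; reflexivity. contradiction. }
      * simpl. rewrite Hw. reflexivity.
    + exists (z2 :: nil). split; [apply NoDup_cons; [simpl; tauto|apply NoDup_nil]|]. split.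
      * intros z. rewrite Hch. simpl. split.
        { intros [<-|[]]. right. auto. }
        { intros [[H _]|[_ ->]]. contradiction. left; reflexivity. }
      * simpl. rewrite Hw. reflexivity.
Qed.

Lemma hmid_V m n z : hmid_weight (Vseg m n) z = 1%nat.
Proof. reflexivity. Qed.

Lemma hmid_H m n x : hmid_weight (Hseg m n) (x, IZR n) = 1%nat <-> x <> IZR m + /2.
Proof.
  simpl. destruct (Req_EM_T x (IZR m + /2)) as [E|E].
  - destruct (Req_EM_T (IZR n) (IZR n)) as [_|E2]; [|congruence]. split; [discriminate|]. intros H; contradiction.
  - split; auto.
Qed.

Ltac zr := repeat first [rewrite plus_IZR in * | rewrite minus_IZR in * | rewrite mult_IZR in * | rewrite opp_IZR in *].

Lemma FP_eq P x y : F_P P (x, y) = red2 (P * (y + P * x) + 1).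
Proof. unfold F_P. simpl. f_equal. ring. Qed.
Lemma FQ_eq P Q x y : F_Q P Q (x, y) = red2 (P * (y + Q * x) + 1).
Proof. unfold F_Q. simpl. f_equal. ring. Qed.

Lemma vert_light (P Q : R) (X Y : Z) (z : point) : Q = 2 - P ->
  is_light_point P Q (Vseg X Y) z <->
  (exists d : Z, z = (IZR X, IZR Y + IZR d - (P*IZR X - IZR (Int_part (P*IZR X)))) /\
     0 <= IZR d - (P*IZR X - IZR (Int_part (P*IZR X))) <= 1 /\
     Lt (red2 (2*(P*IZR X - IZR (Int_part (P*IZR X)))))
        (red2 (P * (IZR Y + IZR (Int_part (P*IZR X)) + IZR d) + 1))) \/
  (exists d : Z, z = (IZR X, IZR Y + IZR d + (P*IZR X - IZR (Int_part (P*IZR X)))) /\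
     0 <= IZR d + (P*IZR X - IZR (Int_part (P*IZR X))) <= 1 /\
     Lt (red2 (2*(P*IZR X - IZR (Int_part (P*IZR X)))))
        (red2 (P * (IZR Y + 2 * IZR X - IZR (Int_part (P*IZR X)) + IZR d) + 1))).
Proof.
  intros HQ. set (FX := Int_part (P * IZR X)).
  assert (HFV : forall y, F_V P (IZR X, y) = red2 (2 * (P * IZR X - IZR FX))).
  { intros y. unfold F_V. simpl. rewrite <- (red2_shift (2 * (P * IZR X - IZR FX)) FX). f_equal. ring. }
  unfold is_light_point. split.
  - intros [Hs [[Hl [H1 H2]]|[Hl [H1 H2]]]].
    + left. destruct z as [x y]. destruct Hs as [Hx Hy]. simpl in Hx, Hy. subst x.
      destruct Hl as [k Hk]. simpl in Hk.
      exists (k - Y - FX)%Z. zr.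
      assert (y = IZR Y + (IZR k - IZR Y - IZR FX) - (P * IZR X - IZR FX)) as Ey by lra.
      split; [rewrite <- Ey; reflexivity|]. split; [lra|].
      apply Lt_iff. simpl in H1, H2. rewrite HFV, FP_eq in *.
      replace (P * (IZR Y + IZR FX + (IZR k - IZR Y - IZR FX)) + 1) with (P * (y + P * IZR X) + 1) by (rewrite Hk; ring).
      split; assumption.
    + right. destruct z as [x y]. destruct Hs as [Hx Hy]. simpl in Hx, Hy. subst x.
      destruct Hl as [k Hk]. simpl in Hk.
      exists (k - 2 * X + FX - Y)%Z. zr.
      assert (y = IZR Y + (IZR k - 2 * IZR X + IZR FX - IZR Y) + (P * IZR X - IZR FX)) as Ey by (rewrite HQ in Hk; lra).
      split; [rewrite <- Ey; reflexivity|]. split; [lra|].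
      apply Lt_iff. simpl in H1, H2. rewrite HFV, FQ_eq in *.
      replace (P * (IZR Y + 2 * IZR X - IZR FX + (IZR k - 2 * IZR X + IZR FX - IZR Y)) + 1) with (P * (y + Q * IZR X) + 1) by (rewrite Hk; ring).
      split; assumption.
  - intros [[d [-> [Hd HL]]]|[d [-> [Hd HL]]]].
    + split. { simpl. split; [reflexivity|]. destruct (Int_part_spec (P*IZR X)). lra. }
      left. split.
      { exists (Y + FX + d)%Z. cbn [fst snd]. zr. fold FX. ring. }
      apply Lt_iff in HL. simpl. rewrite HFV, FP_eq.
      replace (P * (IZR Y + IZR d - (P * IZR X - IZR FX) + P * IZR X) + 1) with (P * (IZR Y + IZR FX + IZR d) + 1) by ring.
      exact HL.
    + split. { simpl. split; [reflexivity|]. lra. }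
      right. split.
      { exists (Y + 2 * X - FX + d)%Z. cbn [fst snd]. zr. fold FX. rewrite HQ. ring. }
      apply Lt_iff in HL. simpl. rewrite HFV, FQ_eq.
      replace (P * (IZR Y + IZR d + (P * IZR X - IZR FX) + Q * IZR X) + 1) with (P * (IZR Y + 2 * IZR X - IZR FX + IZR d) + 1) by (rewrite HQ; ring).
      exact HL.
Qed.

Lemma horiz_light (P Q : R) (X Y : Z) (z : point) : 0 < P -> Q = 2 - P -> 0 < Q ->
  is_light_point P Q (Hseg X Y) z <->
  (exists d : Z, z = (IZR X + (IZR d - (P*IZR X - IZR (Int_part (P*IZR X))))/P, IZR Y) /\
     0 <= (IZR d - (P*IZR X - IZR (Int_part (P*IZR X))))/P <= 1 /\
     Lt (red2 (2*P*IZR Y))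
        (red2 (P * (IZR Y + IZR (Int_part (P*IZR X)) + IZR d) + 1))) \/
  (exists d : Z, z = (IZR X + (IZR d + (P*IZR X - IZR (Int_part (P*IZR X))))/Q, IZR Y) /\
     0 <= (IZR d + (P*IZR X - IZR (Int_part (P*IZR X))))/Q <= 1 /\
     Lt (red2 (2*P*IZR Y))
        (red2 (P * (IZR Y + 2 * IZR X - IZR (Int_part (P*IZR X)) + IZR d) + 1))).
Proof.
  intros HP HQ HQp. set (FX := Int_part (P * IZR X)).
  assert (HFH : forall x, F_H P (x, IZR Y) = red2 (2 * P * IZR Y)).
  { intros x. reflexivity. }
  unfold is_light_point. split.
  - intros [Hs [[Hl [H1 H2]]|[Hl [H1 H2]]]].
    + left. destruct z as [x y]. destruct Hs as [Hx Hy]. simpl in Hx, Hy. subst y.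
      destruct Hl as [k Hk]. simpl in Hk.
      exists (k - Y - FX)%Z. zr.
      assert (x = IZR X + (IZR k - IZR Y - IZR FX - (P * IZR X - IZR FX)) / P) as Ex.
      { field_simplify; [|lra]. apply (Rmult_eq_reg_r P); [|lra]. field_simplify; lra. }
      split; [rewrite <- Ex; reflexivity|]. split.
      { replace ((IZR k - IZR Y - IZR FX - (P * IZR X - IZR FX)) / P) with (x - IZR X) by (rewrite Ex; field; lra). lra. }
      apply Lt_iff. simpl in H1, H2. rewrite HFH, FP_eq in *.
      replace (P * (IZR Y + IZR FX + (IZR k - IZR Y - IZR FX)) + 1) with (P * (IZR Y + P * x) + 1) by (rewrite Hk; ring).
      split; assumption.
    + right. destruct z as [x y]. destruct Hs as [Hx Hy]. simpl in Hx, Hy. subst y.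
      destruct Hl as [k Hk]. simpl in Hk.
      exists (k - 2 * X + FX - Y)%Z. zr.
      assert (x = IZR X + (IZR k - 2 * IZR X + IZR FX - IZR Y + (P * IZR X - IZR FX)) / Q) as Ex.
      { apply (Rmult_eq_reg_r Q); [|lra]. field_simplify; [|lra]. rewrite HQ in *. lra. }
      split; [rewrite <- Ex; reflexivity|]. split.
      { replace ((IZR k - 2 * IZR X + IZR FX - IZR Y + (P * IZR X - IZR FX)) / Q) with (x - IZR X) by (rewrite Ex; field; lra). lra. }
      apply Lt_iff. simpl in H1, H2. rewrite HFH, FQ_eq in *.
      replace (P * (IZR Y + 2 * IZR X - IZR FX + (IZR k - 2 * IZR X + IZR FX - IZR Y)) + 1) with (P * (IZR Y + Q * x) + 1) by (rewrite Hk; ring).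
      split; assumption.
  - intros [[d [-> [Hd HL]]]|[d [-> [Hd HL]]]].
    + split. { simpl. split; [lra|reflexivity]. }
      left. split.
      { exists (Y + FX + d)%Z. cbn [fst snd]. zr. field. lra. }
      apply Lt_iff in HL. simpl. rewrite HFH, FP_eq.
      replace (P * (IZR Y + P * (IZR X + (IZR d - (P * IZR X - IZR FX)) / P)) + 1) with (P * (IZR Y + IZR FX + IZR d) + 1) by (field; lra).
      exact HL.
    + split. { simpl. split; [lra|reflexivity]. }
      right. split.
      { exists (Y + 2 * X - FX + d)%Z. cbn [fst snd]. zr. rewrite HQ. field. lra. }
      apply Lt_iff in HL. simpl. rewrite HFH, FQ_eq.
      replace (P * (IZR Y + Q * (IZR X + (IZR d + (P * IZR X - IZR FX)) / Q)) + 1) with (P * (IZR Y + 2 * IZR X - IZR FX + IZR d) + 1) by (rewrite HQ in *; field; lra).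
      exact HL.
Qed.

Lemma red2_eqk x y k : x = y + 2 * IZR k -> red2 x = red2 y.
Proof. intros ->. apply red2_shift. Qed.

Lemma Z_01 d : -1 < IZR d < 2 -> d = 0%Z \/ d = 1%Z.
Proof. intros [H1 H2]. apply lt_IZR in H1. apply lt_IZR in H2. lia. Qed.
Lemma Z_m10 d : -2 < IZR d < 1 -> d = (-1)%Z \/ d = 0%Z.
Proof. intros [H1 H2]. apply lt_IZR in H1. apply lt_IZR in H2. lia. Qed.
Lemma Z_012 d : -1 < IZR d < 3 -> d = 0%Z \/ d = 1%Z \/ d = 2%Z.
Proof. intros [H1 H2]. apply lt_IZR in H1. apply lt_IZR in H2. lia. Qed.

Lemma Rdiv_le_0_compat x y : 0 <= x -> 0 < y -> 0 <= x / y.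
Proof. intros. unfold Rdiv. apply Rmult_le_pos; [lra|left; apply Rinv_0_lt_compat; lra]. Qed.

Lemma Lt_0 F : ~ Lt 0 F.
Proof. unfold Lt. lra. Qed.

Section Sq.
Variables (P Q : R) (m n : Z).
Hypothesis HP : 0 < P < 1.
Hypothesis HQ : Q = 2 - P.

Definition F0 := Int_part (P * IZR m).
Definition a := P * IZR m - IZR F0.
Definition b := P * IZR n.
Definition g := P * IZR F0.
Definition u1 := red2 (2*a - g - b).
Definition u2 := red2 (2*a + P + b - g).

Lemma a_range : 0 <= a < 1.
Proof. unfold a, F0. destruct (Int_part_spec (P * IZR m)). lra. Qed.

Lemma u1_k : exists k, b + g = 2*a - u1 + 2 * IZR k.
Proof. unfold u1. destruct (red2_spec (2*a - g - b)) as [_ [k Hk]]. exists k. lra. Qed.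
Lemma u2_k : exists k, 2*a + b - g = u2 - P + 2 * IZR k.
Proof. unfold u2. destruct (red2_spec (2*a + P + b - g)) as [_ [k Hk]]. exists (-k)%Z. rewrite opp_IZR. lra. Qed.

Definition hW := red2 (2*a).
Definition FP1W := red2 (2*a - u1 + P + 1).
Definition FQ0W := red2 (u2 - P + 1).

Lemma W_light z : is_light_point P Q (Vseg m n) z <->
  (Lt hW FP1W /\ z = (IZR m, IZR n + 1 - a)) \/ (Lt hW FQ0W /\ z = (IZR m, IZR n + a)).
Proof.
  rewrite (vert_light P Q m n z HQ). fold F0. fold a. fold hW.
  pose proof a_range as Ha. destruct u1_k as [k1 Hk1]. destruct u2_k as [k2 Hk2].
  split.
  - intros [[d [Hz [Hd HL]]]|[d [Hz [Hd HL]]]].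
    + destruct (Z_01 d) as [->| ->]; [lra| |].
      * exfalso. assert (a = 0) as E by (simpl in Hd; lra).
        unfold hW in HL. rewrite E, Rmult_0_r, red2_id in HL by lra. exact (Lt_0 _ HL).
      * left. split; [|rewrite Hz; f_equal; simpl; ring].
        unfold FP1W. replace (red2 (2 * a - u1 + P + 1)) with (red2 (P * (IZR n + IZR F0 + IZR 1) + 1)); [exact HL|].
        apply (red2_eqk _ _ k1). unfold b, g in *. simpl. lra.
    + destruct (Z_01 d) as [->| ->]; [lra| |].
      * right. split; [|rewrite Hz; f_equal; simpl; ring].
        unfold FQ0W. replace (red2 (u2 - P + 1)) with (red2 (P * (IZR n + 2 * IZR m - IZR F0 + IZR 0) + 1)); [exact HL|].
        apply (red2_eqk _ _ (k2 + F0)). rewrite plus_IZR. unfold b, g, a in *. simpl. lra.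
      * exfalso. assert (a = 0) as E by (simpl in Hd; lra).
        unfold hW in HL. rewrite E, Rmult_0_r, red2_id in HL by lra. exact (Lt_0 _ HL).
  - intros [[HL Hz]|[HL Hz]].
    + left. exists 1%Z. split; [rewrite Hz; f_equal; simpl; ring|]. split; [simpl; lra|].
      unfold FP1W in HL. replace (red2 (P * (IZR n + IZR F0 + IZR 1) + 1)) with (red2 (2 * a - u1 + P + 1)); [exact HL|].
      symmetry. apply (red2_eqk _ _ k1). unfold b, g in *. simpl. lra.
    + right. exists 0%Z. split; [rewrite Hz; f_equal; simpl; ring|]. split; [simpl; lra|].
      unfold FQ0W in HL. replace (red2 (P * (IZR n + 2 * IZR m - IZR F0 + IZR 0) + 1)) with (red2 (u2 - P + 1)); [exact HL|].
      symmetry. apply (red2_eqk _ _ (k2 + F0)). rewrite plus_IZR. unfold b, g, a in *. simpl. lra.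
Qed.

Definition hE := red2 (2*a + 2*P).
Definition FP1E := red2 (2*a - u1 + P + 1).
Definition FQ0E := red2 (u2 + P + 1).
Definition FP2E := red2 (2*a - u1 + 2*P + 1).
Definition FQmE := red2 (u2 + 1).

Lemma E_light_lo z : a + P < 1 -> is_light_point P Q (Vseg (m+1) n) z <->
  (Lt hE FP1E /\ z = (IZR (m+1), IZR n + 1 - (a + P))) \/ (Lt hE FQ0E /\ z = (IZR (m+1), IZR n + (a + P))).
Proof.
  intros HaP.
  pose proof a_range as Ha. destruct u1_k as [k1 Hk1]. destruct u2_k as [k2 Hk2].
  assert (HF : Int_part (P * IZR (m + 1)) = F0).
  { apply Int_part_unique. rewrite plus_IZR. unfold a in *. simpl. lra. }
  assert (HaX : P * IZR (m + 1) - IZR (Int_part (P * IZR (m + 1))) = a + P).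
  { rewrite HF, plus_IZR. unfold a. simpl. ring. }
  assert (HhE : red2 (2 * (a + P)) = hE) by (unfold hE; f_equal; ring).
  rewrite (vert_light P Q (m+1) n z HQ). rewrite HaX, HF, HhE.
  split.
  - intros [[d [Hz [Hd HL]]]|[d [Hz [Hd HL]]]].
    + destruct (Z_01 d) as [->| ->]; [lra| simpl in Hd; lra |].
      left. split; [|rewrite Hz; f_equal; simpl; ring].
      unfold FP1E. replace (red2 (2 * a - u1 + P + 1)) with (red2 (P * (IZR n + IZR F0 + IZR 1) + 1)); [exact HL|].
      apply (red2_eqk _ _ k1). unfold b, g in *. simpl. lra.
    + assert (d = 0%Z) as ->. { apply IZR_small. lra. }
      right. split; [|rewrite Hz; f_equal; simpl; ring].
      unfold FQ0E. replace (red2 (u2 + P + 1)) with (red2 (P * (IZR n + 2 * IZR (m+1) - IZR F0 + IZR 0) + 1)); [exact HL|].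
      apply (red2_eqk _ _ (k2 + F0)). rewrite !plus_IZR. unfold b, g, a in *. simpl. lra.
  - intros [[HL Hz]|[HL Hz]].
    + left. exists 1%Z. split; [rewrite Hz; f_equal; simpl; ring|]. split; [simpl; lra|].
      unfold FP1E in HL. replace (red2 (P * (IZR n + IZR F0 + IZR 1) + 1)) with (red2 (2 * a - u1 + P + 1)); [exact HL|].
      symmetry. apply (red2_eqk _ _ k1). unfold b, g in *. simpl. lra.
    + right. exists 0%Z. split; [rewrite Hz; f_equal; simpl; ring|]. split; [simpl; lra|].
      unfold FQ0E in HL. replace (red2 (P * (IZR n + 2 * IZR (m+1) - IZR F0 + IZR 0) + 1)) with (red2 (u2 + P + 1)); [exact HL|].
      symmetry. apply (red2_eqk _ _ (k2 + F0)). rewrite !plus_IZR. unfold b, g, a in *. simpl. lra.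
Qed.

Lemma E_light_hi z : 1 <= a + P -> is_light_point P Q (Vseg (m+1) n) z <->
  (Lt hE FP2E /\ z = (IZR (m+1), IZR n + 2 - (a + P))) \/ (Lt hE FQmE /\ z = (IZR (m+1), IZR n + (a + P) - 1)).
Proof.
  intros HaP.
  pose proof a_range as Ha. destruct u1_k as [k1 Hk1]. destruct u2_k as [k2 Hk2].
  assert (HF : Int_part (P * IZR (m + 1)) = (F0 + 1)%Z).
  { apply Int_part_unique. rewrite !plus_IZR. unfold a in *. simpl. lra. }
  assert (HaX : P * IZR (m + 1) - IZR (Int_part (P * IZR (m + 1))) = a + P - 1).
  { rewrite HF, !plus_IZR. unfold a. simpl. ring. }
  assert (HhE : red2 (2 * (a + P - 1)) = hE).
  { unfold hE. apply (red2_eqk _ _ (-1)%Z). simpl. lra. }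
  rewrite (vert_light P Q (m+1) n z HQ). rewrite HaX, HF, HhE.
  split.
  - intros [[d [Hz [Hd HL]]]|[d [Hz [Hd HL]]]].
    + destruct (Z_01 d) as [->| ->]; [lra| |].
      * exfalso. assert (a + P - 1 = 0) as E by (simpl in Hd; lra).
        rewrite <- HhE, E, Rmult_0_r, red2_id in HL by lra. exact (Lt_0 _ HL).
      * left. split; [|rewrite Hz; f_equal; simpl; ring].
        unfold FP2E. replace (red2 (2 * a - u1 + 2 * P + 1)) with (red2 (P * (IZR n + IZR (F0 + 1) + IZR 1) + 1)); [exact HL|].
        apply (red2_eqk _ _ k1). rewrite plus_IZR. unfold b, g in *. simpl. lra.
    + destruct (Z_01 d) as [->| ->]; [lra| |].
      * right. split; [|rewrite Hz; f_equal; simpl; ring].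
        unfold FQmE. replace (red2 (u2 + 1)) with (red2 (P * (IZR n + 2 * IZR (m+1) - IZR (F0 + 1) + IZR 0) + 1)); [exact HL|].
        apply (red2_eqk _ _ (k2 + F0)). rewrite !plus_IZR. unfold b, g, a in *. simpl. lra.
      * exfalso. assert (a + P - 1 = 0) as E by (simpl in Hd; lra).
        rewrite <- HhE, E, Rmult_0_r, red2_id in HL by lra. exact (Lt_0 _ HL).
  - intros [[HL Hz]|[HL Hz]].
    + left. exists 1%Z. split; [rewrite Hz; f_equal; simpl; ring|]. split; [simpl; lra|].
      unfold FP2E in HL. replace (red2 (P * (IZR n + IZR (F0 + 1) + IZR 1) + 1)) with (red2 (2 * a - u1 + 2 * P + 1)); [exact HL|].
      symmetry. apply (red2_eqk _ _ k1). rewrite plus_IZR. unfold b, g in *. simpl. lra.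
    + right. exists 0%Z. split; [rewrite Hz; f_equal; simpl; ring|]. split; [simpl; lra|].
      unfold FQmE in HL. replace (red2 (P * (IZR n + 2 * IZR (m+1) - IZR (F0 + 1) + IZR 0) + 1)) with (red2 (u2 + 1)); [exact HL|].
      symmetry. apply (red2_eqk _ _ (k2 + F0)). rewrite !plus_IZR. unfold b, g, a in *. simpl. lra.
Qed.

Section Hz.
Variable e : Z.
Definition cY := P * IZR e.
Definition hH := red2 (u2 - u1 - P + 2 * cY).
Definition FP0H := red2 (2*a - u1 + cY + 1).
Definition FP1H := red2 (2*a - u1 + cY + P + 1).
Definition FQ0H := red2 (u2 - P + cY + 1).
Definition FQ1H := red2 (u2 + cY + 1).

Lemma H_light4 z : is_light_point P Q (Hseg m (n + e)) z <->
  (a = 0 /\ Lt hH FP0H /\ z = (IZR m, IZR (n+e))) \/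
  (1 - P <= a /\ Lt hH FP1H /\ z = (IZR m + (1 - a)/P, IZR (n+e))) \/
  (Lt hH FQ0H /\ z = (IZR m + a/Q, IZR (n+e))) \/
  (a <= 1 - P /\ Lt hH FQ1H /\ z = (IZR m + (1 + a)/Q, IZR (n+e))).
Proof.
  pose proof a_range as Ha. destruct u1_k as [k1 Hk1]. destruct u2_k as [k2 Hk2].
  assert (HQp : 0 < Q) by lra.
  rewrite (horiz_light P Q m (n+e) z ltac:(lra) HQ HQp). fold F0. fold a.
  assert (Hh : red2 (2 * P * IZR (n + e)) = hH).
  { unfold hH, cY. apply (red2_eqk _ _ (k1 + k2)). rewrite !plus_IZR. unfold b, g in *. lra. }
  rewrite Hh.
  split.
  - intros [[d [Hz [Hd HL]]]|[d [Hz [Hd HL]]]].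
    + assert (Hd' : a <= IZR d <= a + P).
      { destruct Hd as [Hd1 Hd2]. split.
        - apply Rmult_le_compat_r with (r := P) in Hd1; [|lra].
          unfold Rdiv in Hd1. rewrite Rmult_0_l, Rmult_assoc, Rinv_l, Rmult_1_r in Hd1 by lra. lra.
        - apply Rmult_le_compat_r with (r := P) in Hd2; [|lra].
          unfold Rdiv in Hd2. rewrite Rmult_1_l, Rmult_assoc, Rinv_l, Rmult_1_r in Hd2 by lra. lra. }
      destruct (Z_01 d) as [->| ->]; [lra| |].
      * left. simpl in Hd'. split; [lra|]. split.
        { unfold FP0H. replace (red2 (2 * a - u1 + cY + 1)) with (red2 (P * (IZR (n + e) + IZR F0 + IZR 0) + 1)); [exact HL|].
          apply (red2_eqk _ _ k1). unfold cY. rewrite plus_IZR. unfold b, g in *. simpl. lra. }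
        rewrite Hz. f_equal. simpl. replace a with 0 by lra. field. lra.
      * right; left. simpl in Hd'. split; [lra|]. split.
        { unfold FP1H. replace (red2 (2 * a - u1 + cY + P + 1)) with (red2 (P * (IZR (n + e) + IZR F0 + IZR 1) + 1)); [exact HL|].
          apply (red2_eqk _ _ k1). unfold cY. rewrite plus_IZR. unfold b, g in *. simpl. lra. }
        rewrite Hz. reflexivity.
    + assert (Hd' : - a <= IZR d <= Q - a).
      { destruct Hd as [Hd1 Hd2]. split.
        - apply Rmult_le_compat_r with (r := Q) in Hd1; [|lra].
          unfold Rdiv in Hd1. rewrite Rmult_0_l, Rmult_assoc, Rinv_l, Rmult_1_r in Hd1 by lra. lra.
        - apply Rmult_le_compat_r with (r := Q) in Hd2; [|lra].
          unfold Rdiv in Hd2. rewrite Rmult_1_l, Rmult_assoc, Rinv_l, Rmult_1_r in Hd2 by lra. lra. }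
      destruct (Z_01 d) as [->| ->]; [lra| |].
      * right; right; left. split.
        { unfold FQ0H. replace (red2 (u2 - P + cY + 1)) with (red2 (P * (IZR (n + e) + 2 * IZR m - IZR F0 + IZR 0) + 1)); [exact HL|].
          apply (red2_eqk _ _ (k2 + F0)). unfold cY. rewrite !plus_IZR. unfold b, g, a in *. simpl. lra. }
        rewrite Hz; apply (f_equal2 pair); [simpl; field; lra | reflexivity].
      * right; right; right. simpl in Hd'. split; [lra|]. split.
        { unfold FQ1H. replace (red2 (u2 + cY + 1)) with (red2 (P * (IZR (n + e) + 2 * IZR m - IZR F0 + IZR 1) + 1)); [exact HL|].
          apply (red2_eqk _ _ (k2 + F0)). unfold cY. rewrite !plus_IZR. unfold b, g, a in *. simpl. lra. }
        rewrite Hz; apply (f_equal2 pair); [simpl; field; lra | reflexivity].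
  - intros [[Ha0 [HL Hz]]|[[Ha1 [HL Hz]]|[[HL Hz]|[Ha1 [HL Hz]]]]].
    + left. exists 0%Z. split.
      { rewrite Hz. f_equal. simpl. rewrite Ha0. field. lra. }
      split. { simpl. rewrite Ha0. unfold Rdiv. lra. }
      unfold FP0H in HL. replace (red2 (P * (IZR (n + e) + IZR F0 + IZR 0) + 1)) with (red2 (2 * a - u1 + cY + 1)); [exact HL|].
      symmetry. apply (red2_eqk _ _ k1). unfold cY. rewrite plus_IZR. unfold b, g in *. simpl. lra.
    + left. exists 1%Z. split; [rewrite Hz; reflexivity|].
      split.
      { simpl. split. apply Rdiv_le_0_compat; lra.
        apply Rmult_le_reg_r with P; [lra|]. unfold Rdiv. rewrite Rmult_assoc, Rinv_l by lra. lra. }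
      unfold FP1H in HL. replace (red2 (P * (IZR (n + e) + IZR F0 + IZR 1) + 1)) with (red2 (2 * a - u1 + cY + P + 1)); [exact HL|].
      symmetry. apply (red2_eqk _ _ k1). unfold cY. rewrite plus_IZR. unfold b, g in *. simpl. lra.
    + right. exists 0%Z. split.
      { rewrite Hz; apply (f_equal2 pair); [simpl; field; lra | reflexivity]. }
      split.
      { simpl. split. apply Rdiv_le_0_compat; lra.
        apply Rmult_le_reg_r with Q; [lra|]. unfold Rdiv. rewrite Rmult_assoc, Rinv_l by lra. lra. }
      unfold FQ0H in HL. replace (red2 (P * (IZR (n + e) + 2 * IZR m - IZR F0 + IZR 0) + 1)) with (red2 (u2 - P + cY + 1)); [exact HL|].
      symmetry. apply (red2_eqk _ _ (k2 + F0)). unfold cY. rewrite !plus_IZR. unfold b, g, a in *. simpl. lra.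
    + right. exists 1%Z. split.
      { rewrite Hz; apply (f_equal2 pair); [simpl; field; lra | reflexivity]. }
      split.
      { simpl. split. apply Rdiv_le_0_compat; lra.
        apply Rmult_le_reg_r with Q; [lra|]. unfold Rdiv. rewrite Rmult_assoc, Rinv_l by lra. lra. }
      unfold FQ1H in HL. replace (red2 (P * (IZR (n + e) + 2 * IZR m - IZR F0 + IZR 1) + 1)) with (red2 (u2 + cY + 1)); [exact HL|].
      symmetry. apply (red2_eqk _ _ (k2 + F0)). unfold cY. rewrite !plus_IZR. unfold b, g, a in *. simpl. lra.
Qed.
End Hz.
End Sq.

Lemma pair_neq_snd (x y1 y2 : R) : y1 <> y2 -> (x, y1) <> (x, y2).
Proof. intros H E. inversion E. contradiction. Qed.
Lemma pair_neq_fst (x1 x2 y : R) : x1 <> x2 -> (x1, y) <> (x2, y).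
Proof. intros H E. inversion E. contradiction. Qed.

Section G.
Variables (P Q : R) (m n : Z).
Hypothesis HP : 0 < P < 1.
Hypothesis HQ : Q = 2 - P.

Lemma goodW : 2 * a P m - 1 <> 0 ->
  (good P Q (Vseg m n) <-> xor (Lt (hW P m) (FP1W P m n)) (Lt (hW P m) (FQ0W P m n))).
Proof.
  intros Ha. rewrite (good_two _ _ _ _ _ _ _ (pair_neq_snd (IZR m) (IZR n + 1 - a P m) (IZR n + a P m) ltac:(lra)) (W_light P Q m n HP HQ)).
  rewrite !hmid_V. unfold xor. tauto.
Qed.

Lemma goodE_lo : a P m + P < 1 -> 2 * a P m + 2 * P - 1 <> 0 ->
  (good P Q (Vseg (m+1) n) <-> xor (Lt (hE P m) (FP1E P m n)) (Lt (hE P m) (FQ0E P m n))).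
Proof.
  intros H1 Ha. rewrite (good_two _ _ _ _ _ _ _ (pair_neq_snd (IZR (m+1)) (IZR n + 1 - (a P m + P)) (IZR n + (a P m + P)) ltac:(lra)) (fun z => E_light_lo P Q m n HP HQ z H1)).
  rewrite !hmid_V. unfold xor. tauto.
Qed.

Lemma goodE_hi : 1 <= a P m + P -> 2 * a P m + 2 * P - 3 <> 0 ->
  (good P Q (Vseg (m+1) n) <-> xor (Lt (hE P m) (FP2E P m n)) (Lt (hE P m) (FQmE P m n))).
Proof.
  intros H1 Ha. rewrite (good_two _ _ _ _ _ _ _ (pair_neq_snd (IZR (m+1)) (IZR n + 2 - (a P m + P)) (IZR n + (a P m + P) - 1) ltac:(lra)) (fun z => E_light_hi P Q m n HP HQ z H1)).
  rewrite !hmid_V. unfold xor. tauto.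
Qed.

Section He.
Variable e : Z.
Let h := hH P m n e.
Let P0 := Lt h (FP0H P m n e).
Let P1 := Lt h (FP1H P m n e).
Let Q0 := Lt h (FQ0H P m n e).
Let Q1 := Lt h (FQ1H P m n e).
Let Y := IZR (n + e).
Let A := a P m.

Lemma goodH_R0 : A = 0 -> (good P Q (Hseg m (n+e)) <-> xor (P0 \/ Q0) Q1).
Proof.
  intros Ha.
  assert (Hch : forall z, is_light_point P Q (Hseg m (n+e)) z <->
     ((P0 \/ Q0) /\ z = (IZR m, Y)) \/ (Q1 /\ z = (IZR m + 1/Q, Y))).
  { intros z. rewrite (H_light4 P Q m n HP HQ e z). fold A Y. fold h P0 P1 Q0 Q1.
    assert (E1 : IZR m + A / Q = IZR m) by (rewrite Ha; field; lra).
    assert (E2 : IZR m + (1 + A) / Q = IZR m + 1/Q) by (rewrite Ha; field; lra).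
    rewrite E1, E2. split.
    - intros [[_ [H1 H2]]|[[H0 _]|[[H1 H2]|[_ [H1 H2]]]]]; [left; tauto|lra|left; tauto|right; tauto].
    - intros [[[H1|H1] H2]|[H1 H2]]; [left; tauto|right; right; left; tauto|right; right; right; split; [lra|tauto]]. }
  assert (Hne : (IZR m, Y) <> (IZR m + 1/Q, Y)).
  { apply pair_neq_fst. assert (0 < 1/Q) by (apply Rdiv_lt_0_compat; lra). lra. }
  rewrite (good_two _ _ _ _ _ _ _ Hne Hch). unfold Y. rewrite !hmid_H.
  assert (IZR m <> IZR m + /2) by lra.
  assert (IZR m + 1/Q <> IZR m + /2).
  { intros E. assert (1/Q = /2) as E' by lra.
    apply (f_equal (fun t => t * Q)) in E'. unfold Rdiv in E'. rewrite !Rmult_assoc, Rinv_l in E' by lra. lra. }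
  unfold xor. tauto.
Qed.

Lemma goodH_R1 : 0 < A < 1 - P -> (good P Q (Hseg m (n+e)) <-> xor Q0 Q1).
Proof.
  intros Ha.
  assert (Hch : forall z, is_light_point P Q (Hseg m (n+e)) z <->
     (Q0 /\ z = (IZR m + A/Q, Y)) \/ (Q1 /\ z = (IZR m + (1+A)/Q, Y))).
  { intros z. rewrite (H_light4 P Q m n HP HQ e z). fold A Y. fold h P0 P1 Q0 Q1.
    split.
    - intros [[H0 _]|[[H0 _]|[[H1 H2]|[_ [H1 H2]]]]]; [lra|lra|left; tauto|right; tauto].
    - intros [[H1 H2]|[H1 H2]]; [right; right; left; tauto|right; right; right; split; [lra|tauto]]. }
  assert (HQp : 0 < Q) by lra.
  assert (Hne : (IZR m + A/Q, Y) <> (IZR m + (1+A)/Q, Y)).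
  { apply pair_neq_fst. intros E. assert (A/Q = (1+A)/Q) as E' by lra.
    apply (f_equal (fun t => t * Q)) in E'. unfold Rdiv in E'. rewrite !Rmult_assoc, Rinv_l in E' by lra. lra. }
  rewrite (good_two _ _ _ _ _ _ _ Hne Hch). unfold Y. rewrite !hmid_H.
  assert (IZR m + A/Q <> IZR m + /2).
  { intros E. assert (A/Q = /2) as E' by lra.
    apply (f_equal (fun t => t * Q)) in E'. unfold Rdiv in E'. rewrite !Rmult_assoc, Rinv_l in E' by lra. lra. }
  assert (IZR m + (1+A)/Q <> IZR m + /2).
  { intros E. assert ((1+A)/Q = /2) as E' by lra.
    apply (f_equal (fun t => t * Q)) in E'. unfold Rdiv in E'. rewrite !Rmult_assoc, Rinv_l in E' by lra. lra. }
  unfold xor. tauto.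
Qed.

Lemma goodH_R2 : A = 1 - P -> (good P Q (Hseg m (n+e)) <-> xor Q0 (P1 \/ Q1)).
Proof.
  intros Ha.
  assert (HQp : 0 < Q) by lra.
  assert (Hch : forall z, is_light_point P Q (Hseg m (n+e)) z <->
     (Q0 /\ z = (IZR m + A/Q, Y)) \/ ((P1 \/ Q1) /\ z = (IZR m + 1, Y))).
  { intros z. rewrite (H_light4 P Q m n HP HQ e z). fold A Y. fold h P0 P1 Q0 Q1.
    assert (E1 : IZR m + (1 - A) / P = IZR m + 1) by (rewrite Ha; field; lra).
    assert (E2 : IZR m + (1 + A) / Q = IZR m + 1) by (rewrite Ha, HQ; field; lra).
    rewrite E1, E2. split.
    - intros [[H0 _]|[[_ [H1 H2]]|[[H1 H2]|[_ [H1 H2]]]]]; [lra|right; tauto|left; tauto|right; tauto].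
    - intros [[H1 H2]|[[H1|H1] H2]]; [right; right; left; tauto|right; left; split; [lra|tauto]|right; right; right; split; [lra|tauto]]. }
  assert (Hne : (IZR m + A/Q, Y) <> (IZR m + 1, Y)).
  { apply pair_neq_fst. intros E. assert (A/Q = 1) as E' by lra.
    apply (f_equal (fun t => t * Q)) in E'. unfold Rdiv in E'. rewrite !Rmult_assoc, Rinv_l in E' by lra. lra. }
  rewrite (good_two _ _ _ _ _ _ _ Hne Hch). unfold Y. rewrite !hmid_H.
  assert (IZR m + A/Q <> IZR m + /2).
  { intros E. assert (A/Q = /2) as E' by lra.
    apply (f_equal (fun t => t * Q)) in E'. unfold Rdiv in E'. rewrite !Rmult_assoc, Rinv_l in E' by lra. lra. }
  assert (IZR m + 1 <> IZR m + /2) by lra.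
  unfold xor. tauto.
Qed.

Lemma goodH_R3 : 1 - P < A -> 2 * A + P - 2 <> 0 -> (good P Q (Hseg m (n+e)) <-> xor Q0 P1).
Proof.
  intros Ha Ha2. pose proof (a_range P m) as Hr. fold A in Hr.
  assert (HQp : 0 < Q) by lra.
  assert (Hch : forall z, is_light_point P Q (Hseg m (n+e)) z <->
     (Q0 /\ z = (IZR m + A/Q, Y)) \/ (P1 /\ z = (IZR m + (1-A)/P, Y))).
  { intros z. rewrite (H_light4 P Q m n HP HQ e z). fold A Y. fold h P0 P1 Q0 Q1.
    split.
    - intros [[H0 _]|[[_ [H1 H2]]|[[H1 H2]|[H0 _]]]]; [lra|right; tauto|left; tauto|lra].
    - intros [[H1 H2]|[H1 H2]]; [right; right; left; tauto|right; left; split; [lra|tauto]]. }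
  assert (Hne : (IZR m + A/Q, Y) <> (IZR m + (1-A)/P, Y)).
  { apply pair_neq_fst. intros E. assert (A/Q = (1-A)/P) as E' by lra.
    apply (f_equal (fun t => t * Q * P)) in E'. unfold Rdiv in E'.
    replace (A * / Q * Q * P) with (A * P * (/ Q * Q)) in E' by ring.
    replace ((1 - A) * / P * Q * P) with ((1 - A) * Q * (/ P * P)) in E' by ring.
    rewrite !Rinv_l in E' by lra. rewrite HQ in E'. lra. }
  rewrite (good_two _ _ _ _ _ _ _ Hne Hch). unfold Y. rewrite !hmid_H.
  assert (IZR m + A/Q <> IZR m + /2).
  { intros E. assert (A/Q = /2) as E' by lra.
    apply (f_equal (fun t => t * Q)) in E'. unfold Rdiv in E'. rewrite !Rmult_assoc, Rinv_l in E' by lra. lra. }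
  assert (IZR m + (1-A)/P <> IZR m + /2).
  { intros E. assert ((1-A)/P = /2) as E' by lra.
    apply (f_equal (fun t => t * P)) in E'. unfold Rdiv in E'. rewrite !Rmult_assoc, Rinv_l in E' by lra. lra. }
  unfold xor. tauto.
Qed.

Lemma goodH_R4 : 2 * A + P - 2 = 0 -> ~ good P Q (Hseg m (n+e)).
Proof.
  intros Ha. pose proof (a_range P m) as Hr. fold A in Hr.
  assert (HQp : 0 < Q) by lra.
  assert (Hch : forall z, is_light_point P Q (Hseg m (n+e)) z <->
     ((Q0 \/ P1) /\ z = (IZR m + /2, Y)) \/ (False /\ z = (IZR m, Y))).
  { intros z. rewrite (H_light4 P Q m n HP HQ e z). fold A Y. fold h P0 P1 Q0 Q1.
    assert (E1 : IZR m + A / Q = IZR m + /2) by (rewrite HQ; replace A with (1 - P/2) by lra; field; lra).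
    assert (E2 : IZR m + (1 - A) / P = IZR m + /2) by (replace A with (1 - P/2) by lra; field; lra).
    rewrite E1, E2. split.
    - intros [[H0 _]|[[_ [H1 H2]]|[[H1 H2]|[H0 _]]]]; [lra|left; tauto|left; tauto|lra].
    - intros [[[H1|H1] H2]|[[] _]]; [right; right; left; tauto|right; left; split; [lra|tauto]]. }
  assert (Hne : (IZR m + /2, Y) <> (IZR m, Y)) by (apply pair_neq_fst; lra).
  rewrite (good_two _ _ _ _ _ _ _ Hne Hch). unfold Y. rewrite !hmid_H. tauto.
Qed.
End He.
End G.

Definition sband (u : R * R * R) (k : nat) (x : R) : Prop :=
  let '(c1, c2, c3) := u in
  match k with
  | 1%nat => -1 <= x < c1
  | 2%nat => c1 < x < c2
  | 3%nat => c2 < x < c3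
  | 4%nat => c3 < x <= 1
  | _ => False
  end.

Definition edge_eqb (e1 e2 : edge) : bool :=
  match e1, e2 with eN, eN | eS, eS | eE, eE | eW, eW => true | _, _ => false end.

Definition rl (r : regime) (a b : nat) (e : edge) : bool :=
  (Nat.eqb (fst (spec_pos r e)) a || Nat.eqb (snd (spec_pos r e)) b) &&
  negb (existsb (fun e' => Nat.eqb (fst (spec_pos r e')) a && Nat.eqb (snd (spec_pos r e')) b)
          (eN :: eS :: eE :: eW :: nil)).

Lemma rect_label_iff r a b e : rect_label r a b e <-> rl r a b e = true.
Proof.
  unfold rect_label, rl. rewrite andb_true_iff, orb_true_iff, !Nat.eqb_eq, negb_true_iff.
  split.
  - intros [H1 H2]. split; [exact H1|].
    destruct (existsb _ _) eqn:E; [|reflexivity]. exfalso. apply H2.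
    apply existsb_exists in E. destruct E as [e' [_ He']].
    rewrite andb_true_iff, !Nat.eqb_eq in He'. exists e'.
    destruct (spec_pos r e'). simpl in *. destruct He'. subst. reflexivity.
  - intros [H1 H2]. split; [exact H1|]. intros [e' He'].
    assert (existsb (fun e'0 : edge => (fst (spec_pos r e'0) =? a)%nat && (snd (spec_pos r e'0) =? b)%nat)
       (eN :: eS :: eE :: eW :: nil) = true) as E.
    { apply existsb_exists. exists e'. split; [destruct e'; simpl; tauto|].
      rewrite He'. simpl. rewrite !Nat.eqb_refl. reflexivity. }
    congruence.
Qed.

Lemma iff_true_r (X : Prop) : X -> (X <-> true = true).
Proof. tauto. Qed.
Lemma iff_false_r (X : Prop) : ~ X -> (X <-> false = true).
Proof. intros H. split; [intros; contradiction|discriminate]. Qed.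

Ltac sp H := let Hb := fresh in let H1 := fresh in destruct H as [Hb H1];
  repeat (destruct H1 as [H1|H1]; [try (exfalso; lra)|]); try (exfalso; lra).

Ltac rab A := destruct A as [|[|[|[|[|A]]]]]; simpl in *; try contradiction; try (exfalso; lra).

Ltac finish_rl := rewrite rect_label_iff;
  match goal with |- _ <-> ?x = true => let v := eval vm_compute in x in change x with v end;
  first [apply iff_true_r | apply iff_false_r].

Definition NE (x y : R) := x <> y.

Ltac rab1 A H := destruct A as [|[|[|[|[|A]]]]]; simpl in H; try contradiction; try (exfalso; lra).

Ltac core_tac r A B Hrep Hr HA HB Hh HFP HFQ :=
  destruct Hrep as [[-> [-> ->]]|[-> [[-> | ->] [-> | ->]]]];
  destruct r; simpl in Hr; try (exfalso; lra);
  rab1 A HA; rab1 B HB; finish_rl; unfold xor, Lt;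
  sp Hh; sp HFP; sp HFQ; unfold NE in *; lra.


Lemma coreE_lo (P a u1 u2 h FP FQ Tp U1p U2p : R) r A B :
  0 < P < 1 -> 0 <= a < 1 -> -1 < u1 < 1 -> -1 < u2 < 1 ->
  a + P < 1 ->
  r7 (2*a + 2*P) h -> r7 (2*a - u1 + P + 1) FP -> r7 (u2 + P + 1) FQ ->
  NE FP 0 -> NE FP h -> NE FQ 0 -> NE FQ h ->
  (Tp = 2*a+P-1 /\ U1p = u1 /\ U2p = u2) \/
  (Tp = 2*a+P-3 /\ (U1p = u1 - P \/ U1p = u1 - P + 2) /\ (U2p = u2 - P \/ U2p = u2 - P + 2)) ->
  -1 <= Tp <= 1 -> -1 < U1p < 1 -> -1 < U2p < 1 ->
  regime_applies P r Tp -> sband (cuts P r Tp) A U1p -> sband (cuts P r Tp) B U2p ->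
  (xor (Lt h FP) (Lt h FQ) <-> rect_label r A B eE).
Proof.
  intros HP Ha Hu1 Hu2 Hreg Hh HFP HFQ N1_FP N2_FP N1_FQ N2_FQ Hrep HT HU1 HU2 Hr HA HB.
  destruct Hrep as [[-> [-> ->]]|[-> [[-> | ->] [-> | ->]]]];
  destruct r; simpl in Hr; try (exfalso; lra);
  rab1 A HA; rab1 B HB; finish_rl; unfold xor, Lt;
  sp Hh; sp HFP; sp HFQ; unfold NE in *; lra.
Qed.

Lemma coreE_hi (P a u1 u2 h FP FQ Tp U1p U2p : R) r A B :
  0 < P < 1 -> 0 <= a < 1 -> -1 < u1 < 1 -> -1 < u2 < 1 ->
  1 <= a + P ->
  r7 (2*a + 2*P) h -> r7 (2*a - u1 + 2*P + 1) FP -> r7 (u2 + 1) FQ ->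
  NE FP 0 -> NE FP h -> NE FQ 0 -> NE FQ h ->
  (Tp = 2*a+P-1 /\ U1p = u1 /\ U2p = u2) \/
  (Tp = 2*a+P-3 /\ (U1p = u1 - P \/ U1p = u1 - P + 2) /\ (U2p = u2 - P \/ U2p = u2 - P + 2)) ->
  -1 <= Tp <= 1 -> -1 < U1p < 1 -> -1 < U2p < 1 ->
  regime_applies P r Tp -> sband (cuts P r Tp) A U1p -> sband (cuts P r Tp) B U2p ->
  (xor (Lt h FP) (Lt h FQ) <-> rect_label r A B eE).
Proof.
  intros HP Ha Hu1 Hu2 Hreg Hh HFP HFQ N1_FP N2_FP N1_FQ N2_FQ Hrep HT HU1 HU2 Hr HA HB.
  destruct Hrep as [[-> [-> ->]]|[-> [[-> | ->] [-> | ->]]]];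
  destruct r; simpl in Hr; try (exfalso; lra);
  rab1 A HA; rab1 B HB; finish_rl; unfold xor, Lt;
  sp Hh; sp HFP; sp HFQ; unfold NE in *; lra.
Qed.

Lemma coreS_R0 (P a u1 u2 h P0 Q0 Q1 Tp U1p U2p : R) r A B :
  0 < P < 1 -> 0 <= a < 1 -> -1 < u1 < 1 -> -1 < u2 < 1 ->
  a = 0 ->
  r7 (u2 - u1 - P + 2 * 0) h -> r7 (2*a - u1 + 0 + 1) P0 -> r7 (u2 - P + 0 + 1) Q0 -> r7 (u2 + 0 + 1) Q1 ->
  NE P0 0 -> NE P0 h -> NE Q0 0 -> NE Q0 h -> NE Q1 0 -> NE Q1 h ->
  (Tp = 2*a+P-1 /\ U1p = u1 /\ U2p = u2) \/
  (Tp = 2*a+P-3 /\ (U1p = u1 - P \/ U1p = u1 - P + 2) /\ (U2p = u2 - P \/ U2p = u2 - P + 2)) ->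
  -1 <= Tp <= 1 -> -1 < U1p < 1 -> -1 < U2p < 1 ->
  regime_applies P r Tp -> sband (cuts P r Tp) A U1p -> sband (cuts P r Tp) B U2p ->
  (xor (Lt h P0 \/ Lt h Q0) (Lt h Q1) <-> rect_label r A B eS).
Proof.
  intros HP Ha Hu1 Hu2 Hreg Hh HP0 HQ0 HQ1 N1_P0 N2_P0 N1_Q0 N2_Q0 N1_Q1 N2_Q1 Hrep HT HU1 HU2 Hr HA HB.
  destruct Hrep as [[-> [-> ->]]|[-> [[-> | ->] [-> | ->]]]];
  destruct r; simpl in Hr; try (exfalso; lra);
  rab1 A HA; rab1 B HB; finish_rl; unfold xor, Lt;
  sp Hh; sp HP0; sp HQ0; sp HQ1; unfold NE in *; lra.
Qed.

Lemma coreS_R1 (P a u1 u2 h Q0 Q1 Tp U1p U2p : R) r A B :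
  0 < P < 1 -> 0 <= a < 1 -> -1 < u1 < 1 -> -1 < u2 < 1 ->
  0 < a < 1 - P ->
  r7 (u2 - u1 - P + 2 * 0) h -> r7 (u2 - P + 0 + 1) Q0 -> r7 (u2 + 0 + 1) Q1 ->
  NE Q0 0 -> NE Q0 h -> NE Q1 0 -> NE Q1 h ->
  (Tp = 2*a+P-1 /\ U1p = u1 /\ U2p = u2) \/
  (Tp = 2*a+P-3 /\ (U1p = u1 - P \/ U1p = u1 - P + 2) /\ (U2p = u2 - P \/ U2p = u2 - P + 2)) ->
  -1 <= Tp <= 1 -> -1 < U1p < 1 -> -1 < U2p < 1 ->
  regime_applies P r Tp -> sband (cuts P r Tp) A U1p -> sband (cuts P r Tp) B U2p ->
  (xor (Lt h Q0) (Lt h Q1) <-> rect_label r A B eS).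
Proof.
  intros HP Ha Hu1 Hu2 Hreg Hh HQ0 HQ1 N1_Q0 N2_Q0 N1_Q1 N2_Q1 Hrep HT HU1 HU2 Hr HA HB.
  destruct Hrep as [[-> [-> ->]]|[-> [[-> | ->] [-> | ->]]]];
  destruct r; simpl in Hr; try (exfalso; lra);
  rab1 A HA; rab1 B HB; finish_rl; unfold xor, Lt;
  sp Hh; sp HQ0; sp HQ1; unfold NE in *; lra.
Qed.

Lemma coreS_R2 (P a u1 u2 h P1 Q0 Q1 Tp U1p U2p : R) r A B :
  0 < P < 1 -> 0 <= a < 1 -> -1 < u1 < 1 -> -1 < u2 < 1 ->
  a = 1 - P ->
  r7 (u2 - u1 - P + 2 * 0) h -> r7 (2*a - u1 + 0 + P + 1) P1 -> r7 (u2 - P + 0 + 1) Q0 -> r7 (u2 + 0 + 1) Q1 ->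
  NE P1 0 -> NE P1 h -> NE Q0 0 -> NE Q0 h -> NE Q1 0 -> NE Q1 h ->
  (Tp = 2*a+P-1 /\ U1p = u1 /\ U2p = u2) \/
  (Tp = 2*a+P-3 /\ (U1p = u1 - P \/ U1p = u1 - P + 2) /\ (U2p = u2 - P \/ U2p = u2 - P + 2)) ->
  -1 <= Tp <= 1 -> -1 < U1p < 1 -> -1 < U2p < 1 ->
  regime_applies P r Tp -> sband (cuts P r Tp) A U1p -> sband (cuts P r Tp) B U2p ->
  (xor (Lt h Q0) (Lt h P1 \/ Lt h Q1) <-> rect_label r A B eS).
Proof.
  intros HP Ha Hu1 Hu2 Hreg Hh HP1 HQ0 HQ1 N1_P1 N2_P1 N1_Q0 N2_Q0 N1_Q1 N2_Q1 Hrep HT HU1 HU2 Hr HA HB.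
  destruct Hrep as [[-> [-> ->]]|[-> [[-> | ->] [-> | ->]]]];
  destruct r; simpl in Hr; try (exfalso; lra);
  rab1 A HA; rab1 B HB; finish_rl; unfold xor, Lt;
  sp Hh; sp HP1; sp HQ0; sp HQ1; unfold NE in *; lra.
Qed.

Lemma coreS_R3 (P a u1 u2 h P1 Q0 Tp U1p U2p : R) r A B :
  0 < P < 1 -> 0 <= a < 1 -> -1 < u1 < 1 -> -1 < u2 < 1 ->
  1 - P < a /\ NE (2*a + P - 2) 0 ->
  r7 (u2 - u1 - P + 2 * 0) h -> r7 (2*a - u1 + 0 + P + 1) P1 -> r7 (u2 - P + 0 + 1) Q0 ->
  NE P1 0 -> NE P1 h -> NE Q0 0 -> NE Q0 h ->
  (Tp = 2*a+P-1 /\ U1p = u1 /\ U2p = u2) \/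
  (Tp = 2*a+P-3 /\ (U1p = u1 - P \/ U1p = u1 - P + 2) /\ (U2p = u2 - P \/ U2p = u2 - P + 2)) ->
  -1 <= Tp <= 1 -> -1 < U1p < 1 -> -1 < U2p < 1 ->
  regime_applies P r Tp -> sband (cuts P r Tp) A U1p -> sband (cuts P r Tp) B U2p ->
  (xor (Lt h Q0) (Lt h P1) <-> rect_label r A B eS).
Proof.
  intros HP Ha Hu1 Hu2 Hreg Hh HP1 HQ0 N1_P1 N2_P1 N1_Q0 N2_Q0 Hrep HT HU1 HU2 Hr HA HB.
  destruct Hrep as [[-> [-> ->]]|[-> [[-> | ->] [-> | ->]]]];
  destruct r; simpl in Hr; try (exfalso; lra);
  rab1 A HA; rab1 B HB; finish_rl; unfold xor, Lt;
  sp Hh; sp HP1; sp HQ0; unfold NE in *; lra.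
Qed.

Lemma coreS_R4 (P a u1 u2 h  Tp U1p U2p : R) r A B :
  0 < P < 1 -> 0 <= a < 1 -> -1 < u1 < 1 -> -1 < u2 < 1 ->
  2*a + P - 2 = 0 ->
  r7 (u2 - u1 - P + 2 * 0) h -> 
  
  (Tp = 2*a+P-1 /\ U1p = u1 /\ U2p = u2) \/
  (Tp = 2*a+P-3 /\ (U1p = u1 - P \/ U1p = u1 - P + 2) /\ (U2p = u2 - P \/ U2p = u2 - P + 2)) ->
  -1 <= Tp <= 1 -> -1 < U1p < 1 -> -1 < U2p < 1 ->
  regime_applies P r Tp -> sband (cuts P r Tp) A U1p -> sband (cuts P r Tp) B U2p ->
  (False <-> rect_label r A B eS).
Proof.
  intros HP Ha Hu1 Hu2 Hreg Hh   Hrep HT HU1 HU2 Hr HA HB.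
  destruct Hrep as [[-> [-> ->]]|[-> [[-> | ->] [-> | ->]]]];
  destruct r; simpl in Hr; try (exfalso; lra);
  rab1 A HA; rab1 B HB; finish_rl; unfold xor, Lt;
  sp Hh;  unfold NE in *; lra.
Qed.

Lemma coreN_R0 (P a u1 u2 h P0 Q0 Q1 Tp U1p U2p : R) r A B :
  0 < P < 1 -> 0 <= a < 1 -> -1 < u1 < 1 -> -1 < u2 < 1 ->
  a = 0 ->
  r7 (u2 - u1 - P + 2 * P) h -> r7 (2*a - u1 + P + 1) P0 -> r7 (u2 - P + P + 1) Q0 -> r7 (u2 + P + 1) Q1 ->
  NE P0 0 -> NE P0 h -> NE Q0 0 -> NE Q0 h -> NE Q1 0 -> NE Q1 h ->
  (Tp = 2*a+P-1 /\ U1p = u1 /\ U2p = u2) \/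
  (Tp = 2*a+P-3 /\ (U1p = u1 - P \/ U1p = u1 - P + 2) /\ (U2p = u2 - P \/ U2p = u2 - P + 2)) ->
  -1 <= Tp <= 1 -> -1 < U1p < 1 -> -1 < U2p < 1 ->
  regime_applies P r Tp -> sband (cuts P r Tp) A U1p -> sband (cuts P r Tp) B U2p ->
  (xor (Lt h P0 \/ Lt h Q0) (Lt h Q1) <-> rect_label r A B eN).
Proof.
  intros HP Ha Hu1 Hu2 Hreg Hh HP0 HQ0 HQ1 N1_P0 N2_P0 N1_Q0 N2_Q0 N1_Q1 N2_Q1 Hrep HT HU1 HU2 Hr HA HB.
  destruct Hrep as [[-> [-> ->]]|[-> [[-> | ->] [-> | ->]]]];
  destruct r; simpl in Hr; try (exfalso; lra);
  rab1 A HA; rab1 B HB; finish_rl; unfold xor, Lt;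
  sp Hh; sp HP0; sp HQ0; sp HQ1; unfold NE in *; lra.
Qed.

Lemma coreN_R1 (P a u1 u2 h Q0 Q1 Tp U1p U2p : R) r A B :
  0 < P < 1 -> 0 <= a < 1 -> -1 < u1 < 1 -> -1 < u2 < 1 ->
  0 < a < 1 - P ->
  r7 (u2 - u1 - P + 2 * P) h -> r7 (u2 - P + P + 1) Q0 -> r7 (u2 + P + 1) Q1 ->
  NE Q0 0 -> NE Q0 h -> NE Q1 0 -> NE Q1 h ->
  (Tp = 2*a+P-1 /\ U1p = u1 /\ U2p = u2) \/
  (Tp = 2*a+P-3 /\ (U1p = u1 - P \/ U1p = u1 - P + 2) /\ (U2p = u2 - P \/ U2p = u2 - P + 2)) ->
  -1 <= Tp <= 1 -> -1 < U1p < 1 -> -1 < U2p < 1 ->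
  regime_applies P r Tp -> sband (cuts P r Tp) A U1p -> sband (cuts P r Tp) B U2p ->
  (xor (Lt h Q0) (Lt h Q1) <-> rect_label r A B eN).
Proof.
  intros HP Ha Hu1 Hu2 Hreg Hh HQ0 HQ1 N1_Q0 N2_Q0 N1_Q1 N2_Q1 Hrep HT HU1 HU2 Hr HA HB.
  destruct Hrep as [[-> [-> ->]]|[-> [[-> | ->] [-> | ->]]]];
  destruct r; simpl in Hr; try (exfalso; lra);
  rab1 A HA; rab1 B HB; finish_rl; unfold xor, Lt;
  sp Hh; sp HQ0; sp HQ1; unfold NE in *; lra.
Qed.

Lemma coreN_R2 (P a u1 u2 h P1 Q0 Q1 Tp U1p U2p : R) r A B :
  0 < P < 1 -> 0 <= a < 1 -> -1 < u1 < 1 -> -1 < u2 < 1 ->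
  a = 1 - P ->
  r7 (u2 - u1 - P + 2 * P) h -> r7 (2*a - u1 + P + P + 1) P1 -> r7 (u2 - P + P + 1) Q0 -> r7 (u2 + P + 1) Q1 ->
  NE P1 0 -> NE P1 h -> NE Q0 0 -> NE Q0 h -> NE Q1 0 -> NE Q1 h ->
  (Tp = 2*a+P-1 /\ U1p = u1 /\ U2p = u2) \/
  (Tp = 2*a+P-3 /\ (U1p = u1 - P \/ U1p = u1 - P + 2) /\ (U2p = u2 - P \/ U2p = u2 - P + 2)) ->
  -1 <= Tp <= 1 -> -1 < U1p < 1 -> -1 < U2p < 1 ->
  regime_applies P r Tp -> sband (cuts P r Tp) A U1p -> sband (cuts P r Tp) B U2p ->
  (xor (Lt h Q0) (Lt h P1 \/ Lt h Q1) <-> rect_label r A B eN).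
Proof.
  intros HP Ha Hu1 Hu2 Hreg Hh HP1 HQ0 HQ1 N1_P1 N2_P1 N1_Q0 N2_Q0 N1_Q1 N2_Q1 Hrep HT HU1 HU2 Hr HA HB.
  destruct Hrep as [[-> [-> ->]]|[-> [[-> | ->] [-> | ->]]]];
  destruct r; simpl in Hr; try (exfalso; lra);
  rab1 A HA; rab1 B HB; finish_rl; unfold xor, Lt;
  sp Hh; sp HP1; sp HQ0; sp HQ1; unfold NE in *; lra.
Qed.

Lemma coreN_R3 (P a u1 u2 h P1 Q0 Tp U1p U2p : R) r A B :
  0 < P < 1 -> 0 <= a < 1 -> -1 < u1 < 1 -> -1 < u2 < 1 ->
  1 - P < a /\ NE (2*a + P - 2) 0 ->
  r7 (u2 - u1 - P + 2 * P) h -> r7 (2*a - u1 + P + P + 1) P1 -> r7 (u2 - P + P + 1) Q0 ->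
  NE P1 0 -> NE P1 h -> NE Q0 0 -> NE Q0 h ->
  (Tp = 2*a+P-1 /\ U1p = u1 /\ U2p = u2) \/
  (Tp = 2*a+P-3 /\ (U1p = u1 - P \/ U1p = u1 - P + 2) /\ (U2p = u2 - P \/ U2p = u2 - P + 2)) ->
  -1 <= Tp <= 1 -> -1 < U1p < 1 -> -1 < U2p < 1 ->
  regime_applies P r Tp -> sband (cuts P r Tp) A U1p -> sband (cuts P r Tp) B U2p ->
  (xor (Lt h Q0) (Lt h P1) <-> rect_label r A B eN).
Proof.
  intros HP Ha Hu1 Hu2 Hreg Hh HP1 HQ0 N1_P1 N2_P1 N1_Q0 N2_Q0 Hrep HT HU1 HU2 Hr HA HB.
  destruct Hrep as [[-> [-> ->]]|[-> [[-> | ->] [-> | ->]]]];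
  destruct r; simpl in Hr; try (exfalso; lra);
  rab1 A HA; rab1 B HB; finish_rl; unfold xor, Lt;
  sp Hh; sp HP1; sp HQ0; unfold NE in *; lra.
Qed.

Lemma coreN_R4 (P a u1 u2 h  Tp U1p U2p : R) r A B :
  0 < P < 1 -> 0 <= a < 1 -> -1 < u1 < 1 -> -1 < u2 < 1 ->
  2*a + P - 2 = 0 ->
  r7 (u2 - u1 - P + 2 * P) h -> 
  
  (Tp = 2*a+P-1 /\ U1p = u1 /\ U2p = u2) \/
  (Tp = 2*a+P-3 /\ (U1p = u1 - P \/ U1p = u1 - P + 2) /\ (U2p = u2 - P \/ U2p = u2 - P + 2)) ->
  -1 <= Tp <= 1 -> -1 < U1p < 1 -> -1 < U2p < 1 ->
  regime_applies P r Tp -> sband (cuts P r Tp) A U1p -> sband (cuts P r Tp) B U2p ->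
  (False <-> rect_label r A B eN).
Proof.
  intros HP Ha Hu1 Hu2 Hreg Hh   Hrep HT HU1 HU2 Hr HA HB.
  destruct Hrep as [[-> [-> ->]]|[-> [[-> | ->] [-> | ->]]]];
  destruct r; simpl in Hr; try (exfalso; lra);
  rab1 A HA; rab1 B HB; finish_rl; unfold xor, Lt;
  sp Hh;  unfold NE in *; lra.
Qed.

Lemma coreW (P a u1 u2 h FP FQ Tp U1p U2p : R) r A B :
  0 < P < 1 -> 0 <= a < 1 -> -1 < u1 < 1 -> -1 < u2 < 1 ->
  r7 (2*a) h -> r7 (2*a - u1 + P + 1) FP -> r7 (u2 - P + 1) FQ ->
  NE FP 0 -> NE FP h -> NE FQ 0 -> NE FQ h ->
  (Tp = 2*a+P-1 /\ U1p = u1 /\ U2p = u2) \/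
  (Tp = 2*a+P-3 /\ (U1p = u1 - P \/ U1p = u1 - P + 2) /\ (U2p = u2 - P \/ U2p = u2 - P + 2)) ->
  -1 <= Tp <= 1 -> -1 < U1p < 1 -> -1 < U2p < 1 ->
  regime_applies P r Tp -> sband (cuts P r Tp) A U1p -> sband (cuts P r Tp) B U2p ->
  (xor (Lt h FP) (Lt h FQ) <-> rect_label r A B eW).
Proof.
  intros HP Ha Hu1 Hu2 Hh HFP HFQ N1 N2 N3 N4 Hrep HT HU1 HU2 Hr HA HB.
  destruct Hrep as [[-> [-> ->]]|[-> [[-> | ->] [-> | ->]]]];
  destruct r; simpl in Hr; try (exfalso; lra);
  rab1 A HA; rab1 B HB; finish_rl; unfold xor, Lt;
  sp Hh; sp HFP; sp HFQ; unfold NE in *; lra.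
Qed.

Definition G0 (eps x : R) := x = 0 \/ x >= eps \/ x <= - eps.
Definition G1 (eps x : R) := x >= eps \/ x <= - eps.

Ltac dg H := destruct H as [H|[H|H]]; try (exfalso; lra).
Ltac dg1 H := destruct H as [H|H]; try (exfalso; lra).

Lemma regime_transfer P r T d eps : 0 < eps -> -eps/2 < d < eps/2 ->
  G0 eps (T - (-1+P)) -> G0 eps (T - (1-P)) -> G0 eps (T + 1) -> G0 eps (T - 1) ->
  regime_applies P r (T + d) -> regime_applies P r T.
Proof.
  intros He Hd G1' G2 G3 G4 H. destruct r; simpl in *;
  unfold G0 in *; dg G1'; dg G2; dg G3; dg G4; lra.
Qed.

Lemma sband_transfer P r T d U e eps A : 0 < eps -> -eps/2 < d < eps/2 -> -eps/2 < e < eps/2 ->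
  -1 < U < 1 ->
  G1 eps (U - T) -> G1 eps (U - (1-P)) -> G1 eps (U - (-1+P)) -> G1 eps (U - (2-P+T)) -> G1 eps (U - (-2+P+T)) ->
  band (cuts P r (T + d)) A (U + e) -> sband (cuts P r T) A U.
Proof.
  intros He Hd Hee HU g1 g2 g3 g4 g5 H. unfold G1 in *.
  destruct r; destruct A as [|[|[|[|[|A]]]]]; simpl in *; try contradiction;
  dg1 g1; dg1 g2; dg1 g3; dg1 g4; dg1 g5; lra.
Qed.

Lemma in_piece_shift P L T U1 U2 i j k :
  in_piece P L (T + 2*IZR i, U1 + P*IZR i + 2*IZR j, U2 + P*IZR i + 2*IZR k) <-> in_piece P L (T, U1, U2).
Proof.
  unfold in_piece. split.
  - intros [i0 [j0 [k0 H]]]. exists (i0 - i)%Z, (j0 - j)%Z, (k0 - k)%Z. cbv zeta in *.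
    rewrite !minus_IZR.
    replace (T - 2 * (IZR i0 - IZR i)) with (T + 2 * IZR i - 2 * IZR i0) by ring.
    replace (U1 - P * (IZR i0 - IZR i) - 2 * (IZR j0 - IZR j)) with (U1 + P * IZR i + 2 * IZR j - P * IZR i0 - 2 * IZR j0) by ring.
    replace (U2 - P * (IZR i0 - IZR i) - 2 * (IZR k0 - IZR k)) with (U2 + P * IZR i + 2 * IZR k - P * IZR i0 - 2 * IZR k0) by ring.
    exact H.
  - intros [i0 [j0 [k0 H]]]. exists (i0 + i)%Z, (j0 + j)%Z, (k0 + k)%Z. cbv zeta in *.
    rewrite !plus_IZR.
    replace (T + 2 * IZR i - 2 * (IZR i0 + IZR i)) with (T - 2 * IZR i0) by ring.
    replace (U1 + P * IZR i + 2 * IZR j - P * (IZR i0 + IZR i) - 2 * (IZR j0 + IZR j)) with (U1 - P * IZR i0 - 2 * IZR j0) by ring.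
    replace (U2 + P * IZR i + 2 * IZR k - P * (IZR i0 + IZR i) - 2 * (IZR k0 + IZR k)) with (U2 - P * IZR i0 - 2 * IZR k0) by ring.
    exact H.
Qed.

Lemma regime_cover P T : 0 < P < 1 -> -1 <= T <= 1 -> exists r, regime_applies P r T.
Proof.
  intros HP HT. destruct (Rle_lt_dec T (-1+P)).
  - exists Reg1. simpl. lra.
  - destruct (Rle_lt_dec T (1-P)).
    + exists Reg2. simpl. lra.
    + exists Reg3. simpl. lra.
Qed.

Lemma band_cover3 c1 c2 c3 U : -1 <= U <= 1 -> exists A, band (c1, c2, c3) A U.
Proof.
  intros HU. simpl.
  destruct (Rle_lt_dec U c1) as [H1|H1]; [exists 1%nat; simpl; lra|].
  destruct (Rle_lt_dec U c2) as [H2|H2]; [exists 2%nat; simpl; lra|].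
  destruct (Rle_lt_dec U c3) as [H3|H3]; [exists 3%nat; simpl; lra|].
  exists 4%nat; simpl; lra.
Qed.

Lemma band_cover P r T U : -1 <= U <= 1 -> exists A, band (cuts P r T) A U.
Proof. intros HU. destruct r; apply band_cover3; exact HU. Qed.

Ltac par W := solve [ assumption | apply (Od_1 W); assumption | apply (Ev_2 W) | apply (Ev_twoZ W) | apply (Ev_0 W)
  | apply (Ev_two W); par W
  | apply (Ev_red2 W); par W | apply (Od_red2 W); par W
  | apply (Ev_mulZ W); par W | apply (Ev_Zmul W); par W
  | apply (Ev_opp W); par W | apply (Od_opp W); par W
  | apply (Ev_add W); [par W | par W] | apply (Od_add_EO W); [par W | par W] | apply (Od_add_OE W); [par W | par W]
  | apply (Ev_add_OO W); [par W | par W]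
  | apply (Ev_sub W); [par W | par W] | apply (Od_sub_OE W); [par W | par W] | apply (Od_sub_EO W); [par W | par W]
  | apply (Ev_sub_OO W); [par W | par W] ].

Ltac gap1 W := apply (Od_gap W); try assumption; par W.
Ltac gap0 W := apply (In_gap W); try assumption; apply (Ev_In W); par W.

Section T2s.
Variable W : Z.
Hypothesis Wodd : exists M, W = (2 * M + 1)%Z.
Hypothesis Wpos : (0 < W)%Z.
Variables (P a u1 u2 : R).
Hypothesis HP : 0 < P < 1.
Hypothesis Ha : 0 <= a < 1.
Hypothesis Hu1 : -1 < u1 < 1.
Hypothesis Hu2 : -1 < u2 < 1.
Hypothesis EP : Ev W P.
Hypothesis Ia : In_ W a.
Hypothesis Eu1 : Ev W u1.
Hypothesis Eu2 : Ev W u2.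

Let eps := eps W.

Lemma T2 (d1 d2 d3 : R) (L : edge -> Prop) :
  -eps/2 < d1 < eps/2 -> -eps/2 < d2 < eps/2 -> -eps/2 < d3 < eps/2 ->
  in_piece P L (2*a+P-1 + d1, u1 + d2, u2 + d3) ->
  exists Tp U1p U2p r A B,
  ((Tp = 2*a+P-1 /\ U1p = u1 /\ U2p = u2) \/
   (Tp = 2*a+P-3 /\ (U1p = u1 - P \/ U1p = u1 - P + 2) /\ (U2p = u2 - P \/ U2p = u2 - P + 2))) /\
  -1 <= Tp <= 1 /\ -1 < U1p < 1 /\ -1 < U2p < 1 /\
  regime_applies P r Tp /\ sband (cuts P r Tp) A U1p /\ sband (cuts P r Tp) B U2p /\
  (forall e, L e <-> rect_label r A B e).
Proof.
  intros Hd1 Hd2 Hd3 [i [j [k H]]]. cbv zeta in H.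
  destruct H as [HT [HU1 [HU2 [r [A [B [Hr [HA [HB HL]]]]]]]]].
  pose proof (eps_pos W Wpos) as He. fold eps in He.
  set (Tp := 2*a+P-1 - 2*IZR i).
  set (U1p := u1 - P*IZR i - 2*IZR j).
  set (U2p := u2 - P*IZR i - 2*IZR k).
  assert (ETp : Ev W (Tp + 1)) by (unfold Tp; par W).
  assert (ETm : Ev W (Tp - 1)) by (unfold Tp; par W).
  assert (g1 : G0 eps (Tp + 1)) by (gap0 W).
  assert (g2 : G0 eps (Tp - 1)) by (gap0 W).
  assert (HTp : -1 <= Tp <= 1).
  { unfold G0 in g1, g2. unfold Tp in *. dg g1; dg g2; lra. }
  assert (Hi : i = 0%Z \/ i = 1%Z).
  { apply Z_01. unfold Tp in HTp. lra. }
  assert (g3 : G1 eps (U1p - 1)) by (gap1 W).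
  assert (g4 : G1 eps (U1p + 1)) by (gap1 W).
  assert (g5 : G1 eps (U2p - 1)) by (gap1 W).
  assert (g6 : G1 eps (U2p + 1)) by (gap1 W).
  assert (HU1p : -1 < U1p < 1).
  { unfold G1 in g3, g4. unfold U1p in *. dg1 g3; dg1 g4; lra. }
  assert (HU2p : -1 < U2p < 1).
  { unfold G1 in g5, g6. unfold U2p in *. dg1 g5; dg1 g6; lra. }
  exists Tp, U1p, U2p, r, A, B.
  split.
  { destruct Hi as [-> | ->].
    - left. assert (j = 0%Z) as ->. { apply IZR_small. unfold U1p in HU1p. simpl in HU1p. lra. }
      assert (k = 0%Z) as ->. { apply IZR_small. unfold U2p in HU2p. simpl in HU2p. lra. }
      unfold Tp, U1p, U2p. simpl. split; [ring|split; ring].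
    - right. split; [unfold Tp; simpl; ring|].
      assert (j = (-1)%Z \/ j = 0%Z) as Hj. { apply Z_m10. unfold U1p in HU1p. simpl in HU1p. lra. }
      assert (k = (-1)%Z \/ k = 0%Z) as Hk. { apply Z_m10. unfold U2p in HU2p. simpl in HU2p. lra. }
      unfold U1p, U2p. simpl.
      split; [destruct Hj as [-> | ->]; [right|left]; simpl; ring|destruct Hk as [-> | ->]; [right|left]; simpl; ring]. }
  split; [exact HTp|]. split; [exact HU1p|]. split; [exact HU2p|].
  assert (ET1 : Tp + d1 = 2 * a + P - 1 + d1 - 2 * IZR i) by (unfold Tp; ring).
  assert (EU1 : U1p + d2 = u1 + d2 - P * IZR i - 2 * IZR j) by (unfold U1p; ring).
  assert (EU2 : U2p + d3 = u2 + d3 - P * IZR i - 2 * IZR k) by (unfold U2p; ring).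
  split.
  { apply (regime_transfer P r Tp d1 eps He Hd1); try (gap0 W).
    rewrite ET1. exact Hr. }
  split.
  { apply (sband_transfer P r Tp d1 U1p d2 eps A He Hd1 Hd2 HU1p); try (gap1 W).
    rewrite ET1, EU1. exact HA. }
  split.
  { apply (sband_transfer P r Tp d1 U2p d3 eps B He Hd1 Hd3 HU2p); try (gap1 W).
    rewrite ET1, EU2. exact HB. }
  exact HL.
Qed.

Lemma shift_choose (x : R) : -1 < x <= 3 -> exists i : Z, -1 <= x - 2 * IZR i <= 1 /\ (i = 0%Z \/ i = 1%Z).
Proof.
  intros H. destruct (Rle_lt_dec x 1).
  - exists 0%Z. simpl. split; [lra|auto].
  - exists 1%Z. simpl. split; [lra|auto].
Qed.

Lemma shift_chooseU (x : R) : -3 <= x <= 1 -> exists j : Z, -1 <= x - 2 * IZR j <= 1.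
Proof.
  intros H. destruct (Rle_lt_dec (-1) x).
  - exists 0%Z. simpl. lra.
  - exists (-1)%Z. simpl. lra.
Qed.

Lemma T3 (d1 d2 d3 : R) (L : edge -> Prop) :
  -eps/2 < d1 < eps/2 -> -eps/2 < d2 < eps/2 -> -eps/2 < d3 < eps/2 ->
  (forall Tp U1p U2p r A B,
    ((Tp = 2*a+P-1 /\ U1p = u1 /\ U2p = u2) \/
     (Tp = 2*a+P-3 /\ (U1p = u1 - P \/ U1p = u1 - P + 2) /\ (U2p = u2 - P \/ U2p = u2 - P + 2))) ->
    -1 <= Tp <= 1 -> -1 < U1p < 1 -> -1 < U2p < 1 ->
    regime_applies P r Tp -> sband (cuts P r Tp) A U1p -> sband (cuts P r Tp) B U2p ->
    (forall e, L e <-> rect_label r A B e)) ->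
  in_piece P L (2*a+P-1 + d1, u1 + d2, u2 + d3).
Proof.
  intros Hd1 Hd2 Hd3 HG.
  pose proof (eps_pos W Wpos) as He. fold eps in He.
  assert (gP : G0 eps P) by (gap0 W).
  assert (gu1 : G1 eps (u1 - 1)) by (gap1 W).
  assert (gu1' : G1 eps (u1 + 1)) by (gap1 W).
  assert (gu2 : G1 eps (u2 - 1)) by (gap1 W).
  assert (gu2' : G1 eps (u2 + 1)) by (gap1 W).
  unfold G0, G1 in *. dg gP. dg1 gu1; dg1 gu1'; dg1 gu2; dg1 gu2'.
  destruct (shift_choose (2*a+P-1 + d1)) as [i [Hi Hi01]]; [lra|].
  assert (HiR : 0 <= IZR i <= 1) by (destruct Hi01 as [-> | ->]; simpl; lra).
  destruct (shift_chooseU (u1 + d2 - P * IZR i)) as [j Hj]; [nra|].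
  destruct (shift_chooseU (u2 + d3 - P * IZR i)) as [k Hk]; [nra|].
  set (T' := 2*a+P-1 + d1 - 2 * IZR i).
  set (U1' := u1 + d2 - P * IZR i - 2 * IZR j).
  set (U2' := u2 + d3 - P * IZR i - 2 * IZR k).
  destruct (regime_cover P T' HP Hi) as [r Hr].
  destruct (band_cover P r T' U1' Hj) as [A HA].
  destruct (band_cover P r T' U2' Hk) as [B HB].
  assert (Hpc : in_piece P (rect_label r A B) (2*a+P-1 + d1, u1 + d2, u2 + d3)).
  { exists i, j, k. cbv zeta. split; [exact Hi|]. split; [exact Hj|]. split; [exact Hk|].
    exists r, A, B. split; [exact Hr|]. split; [exact HA|]. split; [exact HB|]. intros; tauto. }
  destruct (T2 d1 d2 d3 _ Hd1 Hd2 Hd3 Hpc) as [Tp [U1p [U2p [r' [A' [B' [Hrep [HT [HU1 [HU2 [Hr' [HA' [HB' Heq]]]]]]]]]]]]].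
  pose proof (HG _ _ _ _ _ _ Hrep HT HU1 HU2 Hr' HA' HB') as HL.
  exists i, j, k. cbv zeta. split; [exact Hi|]. split; [exact Hj|]. split; [exact Hk|].
  exists r, A, B. split; [exact Hr|]. split; [exact HA|]. split; [exact HB|].
  intros e. rewrite HL, Heq. tauto.
Qed.
End T2s.

Lemma r7_of X Y : Y = X -> -7 < X < 7 -> r7 X (red2 Y).
Proof. intros -> H. apply red2_r7. exact H. Qed.

Lemma NE_Od W x : (0 < W)%Z -> Od W x -> NE x 0.
Proof. intros Hw H. unfold NE. apply (Od_nz W Hw x H). Qed.
Lemma NE_Od2 W x y : (0 < W)%Z -> Od W (x - y) -> NE x y.
Proof. intros Hw H E. apply (Od_nz W Hw _ H). rewrite E. ring. Qed.

Lemma Wodd_of p q : even_rational_param p q -> exists M, Z.of_nat (p + q) = (2 * M + 1)%Z.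
Proof.
  intros [Hp [Hpq [Hg He]]].
  assert (Nat.odd (p + q) = true) as Ho.
  { destruct (Nat.even p) eqn:Ep; destruct (Nat.even q) eqn:Eq.
    - exfalso. apply Nat.even_spec in Ep. apply Nat.even_spec in Eq.
      destruct Ep as [x Hx]. destruct Eq as [y Hy].
      assert (Nat.divide 2 (Nat.gcd p q)) as Hd.
      { apply Nat.gcd_greatest; [exists x | exists y]; lia. }
      rewrite Hg in Hd. destruct Hd as [z Hz]. lia.
    - rewrite <- Nat.negb_even, Nat.even_add, Ep, Eq. reflexivity.
    - rewrite <- Nat.negb_even, Nat.even_add, Ep, Eq. reflexivity.
    - exfalso. apply Nat.even_spec in He. rewrite Nat.even_mul, Ep, Eq in He. discriminate. }
  apply Nat.odd_spec in Ho. destruct Ho as [M HM]. exists (Z.of_nat M). lia.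
Qed.

Section Main.
Variables (p q : nat) (m n : Z).
Hypothesis Hpar : even_rational_param p q.

Let P := Ppar p q.
Let Q := Qpar p q.
Let W := Z.of_nat (p + q).

Lemma omega_W : omega p q = IZR W.
Proof. unfold omega, W. rewrite <- INR_IZR_INZ, plus_INR. reflexivity. Qed.

Lemma Wpos : (0 < W)%Z.
Proof. destruct Hpar as [Hp _]. unfold W. lia. Qed.

Lemma Wodd : exists M, W = (2 * M + 1)%Z.
Proof. apply Wodd_of. exact Hpar. Qed.

Lemma HP : 0 < P < 1.
Proof.
  destruct Hpar as [Hp [Hpq _]].
  assert (0 < INR p) by (apply lt_0_INR; lia).
  assert (INR p < INR q) by (apply lt_INR; lia).
  unfold P, Ppar, omega. split.
  - apply Rdiv_lt_0_compat; lra.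
  - apply Rmult_lt_reg_r with (INR p + INR q); [lra|]. unfold Rdiv. rewrite Rmult_assoc, Rinv_l by lra. lra.
Qed.

Lemma HQ : Q = 2 - P.
Proof.
  destruct Hpar as [Hp _]. assert (0 < INR p) by (apply lt_0_INR; lia).
  assert (0 <= INR q) by (apply pos_INR).
  unfold Q, P, Qpar, Ppar, omega. field. lra.
Qed.

Lemma EP : Ev W P.
Proof.
  exists (Z.of_nat p). rewrite <- omega_W, <- INR_IZR_INZ.
  destruct Hpar as [Hp _]. assert (0 < INR p) by (apply lt_0_INR; lia).
  assert (0 <= INR q) by (apply pos_INR).
  unfold P, Ppar, omega. field. lra.
Qed.

Lemma Ia : In_ W (a P m).
Proof.
  exists (2 * Z.of_nat p * m - F0 P m * W)%Z.
  rewrite minus_IZR, !mult_IZR. unfold a.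
  destruct EP as [N HN].
  replace (2 * IZR (Z.of_nat p)) with (P * IZR W).
  - ring.
  - rewrite <- omega_W, <- INR_IZR_INZ. destruct Hpar as [Hp _]. assert (0 < INR p) by (apply lt_0_INR; lia).
    assert (0 <= INR q) by (apply pos_INR). unfold P, Ppar, omega. field. lra.
Qed.

Lemma Eb : Ev W (b P n).
Proof. unfold b. apply Ev_mulZ. exact EP. Qed.
Lemma Eg : Ev W (g P m).
Proof. unfold g. apply Ev_mulZ. exact EP. Qed.

Lemma Eu1 : Ev W (u1 P m n).
Proof. pose proof EP. pose proof Ia. pose proof Eb. pose proof Eg. unfold u1. par W. Qed.
Lemma Eu2 : Ev W (u2 P m n).
Proof. pose proof EP. pose proof Ia. pose proof Eb. pose proof Eg. unfold u2. par W. Qed.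

Lemma u1_range : -1 < u1 P m n < 1.
Proof.
  destruct (red2_spec (2 * a P m - g P m - b P n)) as [Hr _]. fold (u1 P m n) in Hr.
  pose proof Wodd. pose proof EP. pose proof Eu1.
  assert (NE (u1 P m n) 1) by (apply (NE_Od2 W); [exact Wpos| par W]).
  unfold NE in *. lra.
Qed.
Lemma u2_range : -1 < u2 P m n < 1.
Proof.
  destruct (red2_spec (2 * a P m + P + b P n - g P m)) as [Hr _]. fold (u2 P m n) in Hr.
  pose proof Wodd. pose proof EP. pose proof Eu2.
  assert (NE (u2 P m n) 1) by (apply (NE_Od2 W); [exact Wpos| par W]).
  unfold NE in *. lra.
Qed.


Ltac unf := unfold hW, hE, hH, FP1W, FQ0W, FP1E, FQ0E, FP2E, FQmE, FP0H, FP1H, FQ0H, FQ1H, cY.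

Lemma HG Tp U1p U2p r A B :
  (Tp = 2*a P m+P-1 /\ U1p = u1 P m n /\ U2p = u2 P m n) \/
  (Tp = 2*a P m+P-3 /\ (U1p = u1 P m n - P \/ U1p = u1 P m n - P + 2) /\ (U2p = u2 P m n - P \/ U2p = u2 P m n - P + 2)) ->
  -1 <= Tp <= 1 -> -1 < U1p < 1 -> -1 < U2p < 1 ->
  regime_applies P r Tp -> sband (cuts P r Tp) A U1p -> sband (cuts P r Tp) B U2p ->
  forall e, good P Q (edge_seg m n e) <-> rect_label r A B e.
Proof.
  intros Hrep HT HU1 HU2 Hr HA HB.
  pose proof HP as HP0. pose proof HQ as HQ0. pose proof Wpos as Wp. pose proof Wodd as Wo.
  pose proof EP as EP0. pose proof Ia as Ia0. pose proof Eu1 as Eu10. pose proof Eu2 as Eu20.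
  pose proof (a_range P m) as Har. pose proof u1_range as Hu1r. pose proof u2_range as Hu2r.
  fold P in Har.
  assert (Hreg : a P m = 0 \/ 0 < a P m < 1 - P \/ a P m = 1 - P \/ (1 - P < a P m /\ NE (2 * a P m + P - 2) 0) \/ 2 * a P m + P - 2 = 0).
  { unfold NE. destruct (Req_dec (a P m) 0); [left; auto|].
    destruct (Rlt_le_dec (a P m) (1 - P)); [right; left; lra|].
    destruct (Req_dec (a P m) (1 - P)); [right; right; left; auto|].
    destruct (Req_dec (2 * a P m + P - 2) 0); [right; right; right; right; auto|].
    right; right; right; left. split; [lra|auto]. }
  Ltac fin_core W :=
    match goal with
    | |- r7 _ _ => apply r7_of; [unf; simpl; ring | lra]
    | |- NE ?x 0 => apply (NE_Od W); [assumption| unf; par W]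
    | |- NE ?x ?y => apply (NE_Od2 W); [assumption| unf; par W]
    | _ => assumption
    end.
  intros e. destruct e; simpl edge_seg.
  -
    destruct Hreg as [H|[H|[H|[H|H]]]].
    + rewrite (goodH_R0 P Q m n HP0 HQ0 1 H).
      apply (coreN_R0 P (a P m) (u1 P m n) (u2 P m n) _ _ _ _ Tp U1p U2p r A B); fin_core W.
    + rewrite (goodH_R1 P Q m n HP0 HQ0 1 H).
      apply (coreN_R1 P (a P m) (u1 P m n) (u2 P m n) _ _ _ Tp U1p U2p r A B); fin_core W.
    + rewrite (goodH_R2 P Q m n HP0 HQ0 1 H).
      apply (coreN_R2 P (a P m) (u1 P m n) (u2 P m n) _ _ _ _ Tp U1p U2p r A B); fin_core W.
    + destruct H as [H H']. rewrite (goodH_R3 P Q m n HP0 HQ0 1 H H').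
      apply (coreN_R3 P (a P m) (u1 P m n) (u2 P m n) _ _ _ Tp U1p U2p r A B); try fin_core W. split; assumption.
    + assert (HnG := goodH_R4 P Q m n HP0 HQ0 1 H).
      assert (Hc : False <-> rect_label r A B eN).
      { apply (coreN_R4 P (a P m) (u1 P m n) (u2 P m n) (hH P m n 1) Tp U1p U2p r A B); fin_core W. }
      split; [intros Hg; contradiction|]. intros Hl. exfalso. apply Hc. exact Hl.
  -
    replace (Hseg m n) with (Hseg m (n + 0)) by (f_equal; lia).
    destruct Hreg as [H|[H|[H|[H|H]]]].
    + rewrite (goodH_R0 P Q m n HP0 HQ0 0 H).
      apply (coreS_R0 P (a P m) (u1 P m n) (u2 P m n) _ _ _ _ Tp U1p U2p r A B); fin_core W.
    + rewrite (goodH_R1 P Q m n HP0 HQ0 0 H).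
      apply (coreS_R1 P (a P m) (u1 P m n) (u2 P m n) _ _ _ Tp U1p U2p r A B); fin_core W.
    + rewrite (goodH_R2 P Q m n HP0 HQ0 0 H).
      apply (coreS_R2 P (a P m) (u1 P m n) (u2 P m n) _ _ _ _ Tp U1p U2p r A B); fin_core W.
    + destruct H as [H H']. rewrite (goodH_R3 P Q m n HP0 HQ0 0 H H').
      apply (coreS_R3 P (a P m) (u1 P m n) (u2 P m n) _ _ _ Tp U1p U2p r A B); try fin_core W. split; assumption.
    + assert (HnG := goodH_R4 P Q m n HP0 HQ0 0 H).
      assert (Hc : False <-> rect_label r A B eS).
      { apply (coreS_R4 P (a P m) (u1 P m n) (u2 P m n) (hH P m n 0) Tp U1p U2p r A B); fin_core W. }
      split; [intros Hg; contradiction|]. intros Hl. exfalso. apply Hc. exact Hl.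
  -
    destruct (Rlt_le_dec (a P m + P) 1) as [H|H].
    + rewrite (goodE_lo P Q m n HP0 HQ0 H) by (apply (Od_nz W); [assumption| par W]).
      apply (coreE_lo P (a P m) (u1 P m n) (u2 P m n) _ _ _ Tp U1p U2p r A B); fin_core W.
    + rewrite (goodE_hi P Q m n HP0 HQ0 H) by (apply (Od_nz W); [assumption| par W]).
      apply (coreE_hi P (a P m) (u1 P m n) (u2 P m n) _ _ _ Tp U1p U2p r A B); fin_core W.
  -
    rewrite (goodW P Q m n HP0 HQ0) by (apply (Od_nz W); [assumption| par W]).
    apply (coreW P (a P m) (u1 P m n) (u2 P m n) _ _ _ Tp U1p U2p r A B); fin_core W.
Qed.

Lemma Xi_center : exists i0 j0 k0 : Z,
  Xi P (center m n) = (2 * a P m + P - 1 + 2 * IZR i0, u1 P m n + P * IZR i0 + 2 * IZR j0, u2 P m n + P * IZR i0 + 2 * IZR k0).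
Proof.
  destruct (red2_spec (2 * a P m - g P m - b P n)) as [_ [k1 Hk1]]. fold (u1 P m n) in Hk1.
  destruct (red2_spec (2 * a P m + P + b P n - g P m)) as [_ [k2 Hk2]]. fold (u2 P m n) in Hk2.
  exists (F0 P m + n + 1)%Z, (F0 P m - k1)%Z, (F0 P m - k2)%Z.
  unfold Xi, center. simpl fst; simpl snd. rewrite Hk1, Hk2.
  rewrite !plus_IZR, !minus_IZR. unfold a, g, b. simpl IZR.
  f_equal; [f_equal|]; field.
Qed.

Theorem main_thm :
  exists L : edge -> Prop,
    in_piece_interior P L (Xi P (center m n)) /\
    (forall L' : edge -> Prop,
       in_piece_interior P L' (Xi P (center m n)) ->
       forall e, L' e <-> L e) /\
    (forall e : edge, good P Q (edge_seg m n e) <-> L e).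
Proof.
  pose proof HP as HP0. pose proof Wpos as Wp. pose proof Wodd as Wo.
  pose proof EP as EP0. pose proof Ia as Ia0. pose proof Eu1 as Eu10. pose proof Eu2 as Eu20.
  pose proof (a_range P m) as Har. pose proof u1_range as Hu1r. pose proof u2_range as Hu2r.
  pose proof (eps_pos W Wp) as He.
  destruct Xi_center as [i0 [j0 [k0 EXi]]].
  exists (fun e => good P Q (edge_seg m n e)).
  split; [|split].
  - unfold in_piece_interior. rewrite EXi. exists (eps W / 2). split; [lra|].
    intros T' U1' U2' H1 H2 H3.
    apply Rabs_def2 in H1. apply Rabs_def2 in H2. apply Rabs_def2 in H3.
    set (d1 := T' - (2 * a P m + P - 1 + 2 * IZR i0)) in *.
    set (d2 := U1' - (u1 P m n + P * IZR i0 + 2 * IZR j0)) in *.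
    set (d3 := U2' - (u2 P m n + P * IZR i0 + 2 * IZR k0)) in *.
    replace T' with ((2 * a P m + P - 1 + d1) + 2 * IZR i0) by (unfold d1; ring).
    replace U1' with ((u1 P m n + d2) + P * IZR i0 + 2 * IZR j0) by (unfold d2; ring).
    replace U2' with ((u2 P m n + d3) + P * IZR i0 + 2 * IZR k0) by (unfold d3; ring).
    rewrite in_piece_shift.
    apply (T3 W Wo Wp P (a P m) (u1 P m n) (u2 P m n) HP0 Har Hu1r Hu2r EP0 Ia0 Eu10 Eu20 d1 d2 d3); try lra.
    intros Tp U1p U2p r A B Hrep HT HU1 HU2 Hr HA HB e.
    rewrite (HG Tp U1p U2p r A B Hrep HT HU1 HU2 Hr HA HB e). tauto.
  - intros L' HL'. unfold in_piece_interior in HL'. rewrite EXi in HL'.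
    destruct HL' as [eps' [He' Hint]].
    assert (Hpc := Hint _ _ _ ltac:(rewrite Rminus_diag, Rabs_R0; exact He')
                              ltac:(rewrite Rminus_diag, Rabs_R0; exact He')
                              ltac:(rewrite Rminus_diag, Rabs_R0; exact He')).
    replace (2 * a P m + P - 1 + 2 * IZR i0) with ((2 * a P m + P - 1 + 0) + 2 * IZR i0) in Hpc by ring.
    replace (u1 P m n + P * IZR i0 + 2 * IZR j0) with ((u1 P m n + 0) + P * IZR i0 + 2 * IZR j0) in Hpc by ring.
    replace (u2 P m n + P * IZR i0 + 2 * IZR k0) with ((u2 P m n + 0) + P * IZR i0 + 2 * IZR k0) in Hpc by ring.
    rewrite in_piece_shift in Hpc.
    destruct (T2 W Wo Wp P (a P m) (u1 P m n) (u2 P m n) HP0 Har Hu1r Hu2r EP0 Ia0 Eu10 Eu20 0 0 0 L'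
      ltac:(lra) ltac:(lra) ltac:(lra) Hpc)
      as [Tp [U1p [U2p [r [A [B [Hrep [HT [HU1 [HU2 [Hr [HA [HB Heq]]]]]]]]]]]]].
    intros e. rewrite Heq, (HG Tp U1p U2p r A B Hrep HT HU1 HU2 Hr HA HB e). tauto.
  - intros e. tauto.
Qed.

End Main.

Theorem theorem3p3 (p q : nat) (m n : Z) :
  even_rational_param p q ->
  exists L : edge -> Prop,
    in_piece_interior (Ppar p q) L (Xi (Ppar p q) (center m n)) /\
    (forall L' : edge -> Prop,
       in_piece_interior (Ppar p q) L' (Xi (Ppar p q) (center m n)) ->
       forall e, L' e <-> L e) /\
    (forall e : edge, good (Ppar p q) (Qpar p q) (edge_seg m n e) <-> L e).
Proof. intros H. exact (main_thm p q m n H). Qed.
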